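(* Fix $\Omega>0$, $\beta>0$ and $x\in\mathbb R$. For $h>0$ put $\xi=e^{\beta h}$, $\omega_0=\Omega/h$, $\Omega_0(h)=\frac{\omega_0}{\xi}|1-\xi|$, $\Omega_D(h)=\frac{\omega_0}{\xi}(1+\xi)$, $\omega_h^2(k)=\frac{\omega_0^2}{\xi^2}\big((\xi-\cos k)^2+\sin^2k\big)$, and $$\mathcal G^{(h)}_n(z)=\frac{1}{2\pi}\int_0^{2\pi}\frac{e^{ikn}}{\omega_h^2(k)-z^2}\,dk$$ for integers $n$ and $z$ with $\omega_h^2(k)\ne z^2$ for all $k$. Let $n(h)$ be integers with $n(h)\,h\to|x|$ as $h\to0^+$. Then: (1) if $0\le\omega<\beta\Omega$, $$\lim_{h\to0^+}\frac1h\,\mathcal G^{(h)}_{n(h)}(\omega)=\frac{1}{2\Omega^2}\,\frac{e^{-|x|\sqrt{\beta^2-\omega^2/\Omega^2}}}{\sqrt{\beta^2-\omega^2/\Omega^2}};$$ (2) if $\omega>\beta\Omega$, $$\lim_{h\to0^+}\frac1h\,\lim_{\epsilon\to0^+}\mathcal G^{(h)}_{n(h)}(\omega+i\epsilon)=\frac{i}{2\Omega^2}\,\frac{e^{i|x|\sqrt{\omega^2/\Omega^2-\beta^2}}}{\sqrt{\omega^2/\Omega^2-\beta^2}}.$$ Moreover these limits $g(|x|,\omega)$ satisfy, in the sense of distributions in $x$, $-\Omega^2\big(\frac{d^2}{dx^2}+\frac{\omega^2}{\Omega^2}-\beta^2\big)g(|x|,\omega)=\delta(x)$.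
   Context: This is the continuum limit of the lattice Green's function of the exponentially graded linear chain (masses $m_0\xi^{2p}$, spring constants $m_0\xi^{2p}\omega_0^2$) with lattice spacing $h$, under the scalings $\xi=e^{\beta h}$, $\omega_0^2=\Omega^2/h^2$, particle position $x=ph$; the continuum equation of motion is $e^{2\beta x}\partial_t^2u=\Omega^2\partial_x(e^{2\beta x}\partial_xu)$, which after $u=e^{-\beta x}y$ becomes the Klein–Gordon equation $\Omega^{-2}\partial_t^2y-\partial_x^2y+\beta^2y=0$. The factor $1/h$ converts matrix multiplication into convolution integrals. For small $h$ one has $\Omega_0(h)\to\beta\Omega$ and $\Omega_D(h)\to\infty$. *)

(* Defs.v *)
From Stdlib Require Import Reals.
From Coquelicot Require Import Coquelicot.
Open Scope R_scope.

Definition cexpi (t : R) : C := (cos t, sin t).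

Definition xi (beta h : R) : R := exp (beta * h).
Definition om0 (Om h : R) : R := Om / h.
Definition Omega0 (Om beta h : R) : R := om0 Om h / xi beta h * Rabs (1 - xi beta h).
Definition OmegaD (Om beta h : R) : R := om0 Om h / xi beta h * (1 + xi beta h).

Definition omh2 (Om beta h k : R) : R :=
  (om0 Om h) ^ 2 / (xi beta h) ^ 2 * ((xi beta h - cos k) ^ 2 + (sin k) ^ 2).

Definition Gh (Om beta h : R) (n : Z) (z : C) : C :=
  Cmult (RtoC (/ (2 * PI)))
    (@RInt C_R_CompleteNormedModule
       (fun k : R => Cdiv (cexpi (k * IZR n)) (Cminus (RtoC (omh2 Om beta h k)) (Cmult z z)))
       0 (2 * PI)).

Definition gcont (Om beta ax om : R) : C :=
  if Rlt_dec om (beta * Om) then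
    let s := sqrt (beta ^ 2 - om ^ 2 / Om ^ 2) in
    RtoC (/ (2 * Om ^ 2) * (exp (- ax * s) / s))
  else
    let s := sqrt (om ^ 2 / Om ^ 2 - beta ^ 2) in
    Cmult (Cmult Ci (RtoC (/ (2 * Om ^ 2)))) (Cdiv (cexpi (ax * s)) (RtoC s)).

Definition test_function (phi : R -> R) : Prop :=
  (forall (m : nat) (x : R), ex_derive_n phi m x) /\
  (exists M : R, forall x : R, M < Rabs x -> phi x = 0).

(* Main.v *)
Require Import Defs.
From Stdlib Require Import Reals Lra Lia Psatz ZArith.
From Coquelicot Require Import Coquelicot.
Open Scope R_scope.

Section Lims.
Context {T : Type} {F : (T -> Prop) -> Prop} {FF : Filter F}.

Lemma lim_plus (f g : T -> R) a b :
  filterlim f F (locally a) -> filterlim g F (locally b) ->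
  filterlim (fun t => f t + g t) F (locally (a + b)).
Proof.
intros Hf Hg. apply (filterlim_comp_2 f g Rplus Hf Hg).
apply (@filterlim_plus R_AbsRing R_NormedModule a b).
Qed.

Lemma lim_mult (f g : T -> R) a b :
  filterlim f F (locally a) -> filterlim g F (locally b) ->
  filterlim (fun t => f t * g t) F (locally (a * b)).
Proof.
intros Hf Hg. apply (filterlim_comp_2 f g Rmult Hf Hg).
apply (@filterlim_mult R_AbsRing a b).
Qed.

Lemma lim_comp_der (f : T -> R) (g : R -> R) a :
  ex_derive g a -> filterlim f F (locally a) ->
  filterlim (fun t => g (f t)) F (locally (g a)).
Proof.
intros Hd Hf. eapply filterlim_comp. exact Hf.
apply (ex_derive_continuous g a Hd).
Qed.

Lemma lim_const (c : R) : filterlim (fun _ : T => c) F (locally c).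
Proof. apply filterlim_const. Qed.

Lemma lim_opp (f : T -> R) a :
  filterlim f F (locally a) -> filterlim (fun t => - f t) F (locally (- a)).
Proof. intros H. apply (lim_comp_der f (fun x => - x)). auto_derive; auto. exact H. Qed.

Lemma lim_minus (f g : T -> R) a b :
  filterlim f F (locally a) -> filterlim g F (locally b) ->
  filterlim (fun t => f t - g t) F (locally (a - b)).
Proof. intros. apply lim_plus; auto. apply lim_opp; auto. Qed.

Lemma lim_inv (f : T -> R) a : a <> 0 ->
  filterlim f F (locally a) -> filterlim (fun t => / f t) F (locally (/ a)).
Proof. intros Ha H. apply (lim_comp_der f Rinv). auto_derive; auto. exact H. Qed.

Lemma lim_ext (f g : T -> R) (a : R) : F (fun t => f t = g t) ->
  filterlim f F (locally a) -> filterlim g F (locally a).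
Proof. intros. eapply filterlim_ext_loc; eauto. Qed.

Lemma lim_eq (f : T -> R) (a b : R) : a = b -> filterlim f F (locally a) -> filterlim f F (locally b).
Proof. intros ->; auto. Qed.

End Lims.

Section CLims.
Context {T : Type} {F : (T -> Prop) -> Prop} {FF : Filter F}.

Lemma C_lim (f : T -> C) (l : C) :
  filterlim (fun t => fst (f t)) F (locally (fst l)) ->
  filterlim (fun t => snd (f t)) F (locally (snd l)) ->
  filterlim f F (locally l).
Proof.
intros H1 H2 P [eps HP].
assert (A1 := H1 (ball (fst l) eps) (locally_ball _ _)).
assert (A2 := H2 (ball (snd l) eps) (locally_ball _ _)).
unfold filtermap in *.
generalize (filter_and _ _ A1 A2). apply filter_imp.
intros t [B1 B2]. apply HP. split; auto.
Qed.

Lemma C_lim_fst (f : T -> C) (l : C) : filterlim f F (locally l) ->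
  filterlim (fun t => fst (f t)) F (locally (fst l)).
Proof.
intros H. destruct l as [a b]. eapply filterlim_comp. exact H.
apply (continuous_fst a b).
Qed.

Lemma C_lim_snd (f : T -> C) (l : C) : filterlim f F (locally l) ->
  filterlim (fun t => snd (f t)) F (locally (snd l)).
Proof.
intros H. destruct l as [a b]. eapply filterlim_comp. exact H.
apply (continuous_snd a b).
Qed.

Lemma C_lim_mult (f g : T -> C) (a b : C) :
  filterlim f F (locally a) -> filterlim g F (locally b) ->
  filterlim (fun t => Cmult (f t) (g t)) F (locally (Cmult a b)).
Proof.
intros Hf Hg. apply C_lim; simpl.
- apply lim_minus; apply lim_mult; first [apply C_lim_fst | apply C_lim_snd]; auto.
- apply lim_plus; apply lim_mult; first [apply C_lim_fst | apply C_lim_snd]; auto.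
Qed.

Lemma C_lim_plus (f g : T -> C) (a b : C) :
  filterlim f F (locally a) -> filterlim g F (locally b) ->
  filterlim (fun t => Cplus (f t) (g t)) F (locally (Cplus a b)).
Proof.
intros Hf Hg. apply C_lim; simpl.
- apply lim_plus; apply C_lim_fst; auto.
- apply lim_plus; apply C_lim_snd; auto.
Qed.

Lemma C_lim_opp (f : T -> C) (a : C) :
  filterlim f F (locally a) -> filterlim (fun t => Copp (f t)) F (locally (Copp a)).
Proof.
intros Hf. apply C_lim; simpl.
- apply lim_opp; apply C_lim_fst; auto.
- apply lim_opp; apply C_lim_snd; auto.
Qed.

Lemma C_lim_minus (f g : T -> C) (a b : C) :
  filterlim f F (locally a) -> filterlim g F (locally b) ->
  filterlim (fun t => Cminus (f t) (g t)) F (locally (Cminus a b)).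
Proof. intros. unfold Cminus. apply C_lim_plus; auto. apply C_lim_opp; auto. Qed.

Lemma C_lim_inv (f : T -> C) (a : C) : a <> 0%C ->
  filterlim f F (locally a) -> filterlim (fun t => Cinv (f t)) F (locally (Cinv a)).
Proof.
intros Ha Hf.
assert (Hd : fst a ^ 2 + snd a ^ 2 <> 0).
{ intro E. apply Ha. destruct a as [x y]; simpl in *.
  assert (x = 0) by nra. assert (y = 0) by nra. subst; reflexivity. }
assert (Hden : filterlim (fun t => fst (f t) ^ 2 + snd (f t) ^ 2) F
   (locally (fst a ^ 2 + snd a ^ 2))).
{ apply lim_plus.
  - apply (lim_ext (fun t => fst (f t) * fst (f t))).
    apply filter_forall; intro t; simpl; ring.
    replace (fst a ^ 2) with (fst a * fst a) by ring. apply lim_mult; apply C_lim_fst; auto.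
  - apply (lim_ext (fun t => snd (f t) * snd (f t))).
    apply filter_forall; intro t; simpl; ring.
    replace (snd a ^ 2) with (snd a * snd a) by ring. apply lim_mult; apply C_lim_snd; auto. }
apply C_lim; simpl.
- apply lim_mult. apply C_lim_fst; auto. apply lim_inv; auto.
- apply lim_mult. apply lim_opp, C_lim_snd; auto. apply lim_inv; auto.
Qed.

Lemma C_lim_div (f g : T -> C) (a b : C) : b <> 0%C ->
  filterlim f F (locally a) -> filterlim g F (locally b) ->
  filterlim (fun t => Cdiv (f t) (g t)) F (locally (Cdiv a b)).
Proof. intros. unfold Cdiv. apply C_lim_mult; auto. apply C_lim_inv; auto. Qed.

Lemma C_lim_const (c : C) : filterlim (fun _ : T => c) F (locally c).
Proof. apply filterlim_const. Qed.

Lemma C_lim_pow (f : T -> C) (a : C) (m : nat) :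
  filterlim f F (locally a) -> filterlim (fun t => Cpow (f t) m) F (locally (Cpow a m)).
Proof.
intros Hf. induction m; simpl. apply C_lim_const.
apply C_lim_mult; auto.
Qed.

Lemma C_lim_RtoC (f : T -> R) a :
  filterlim f F (locally a) -> filterlim (fun t => RtoC (f t)) F (locally (RtoC a)).
Proof. intros H. apply C_lim; simpl; auto. apply lim_const. Qed.

Lemma C_lim_ext (f g : T -> C) (a : C) : F (fun t => f t = g t) ->
  filterlim f F (locally a) -> filterlim g F (locally a).
Proof. intros. eapply filterlim_ext_loc; eauto. Qed.

End CLims.

Notation CV := C_R_CompleteNormedModule.

Lemma is_RInt_C (f : R -> C) a b l1 l2 :
  is_RInt (fun t => fst (f t)) a b l1 -> is_RInt (fun t => snd (f t)) a b l2 ->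
  @is_RInt CV f a b (l1, l2).
Proof.
intros H1 H2.
exact (@is_RInt_fct_extend_pair R_NormedModule R_NormedModule f a b l1 l2 H1 H2).
Qed.

Lemma is_RInt_C_fst (f : R -> C) a b l :
  @is_RInt CV f a b l -> is_RInt (fun t => fst (f t)) a b (fst l).
Proof.
intros H. exact (@is_RInt_fct_extend_fst R_NormedModule R_NormedModule f a b l H).
Qed.

Lemma is_RInt_C_snd (f : R -> C) a b l :
  @is_RInt CV f a b l -> is_RInt (fun t => snd (f t)) a b (snd l).
Proof.
intros H. exact (@is_RInt_fct_extend_snd R_NormedModule R_NormedModule f a b l H).
Qed.

Lemma is_RInt_Cmult_l (f : R -> C) a b l (c : C) :
  @is_RInt CV f a b l -> @is_RInt CV (fun t => Cmult c (f t)) a b (Cmult c l).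
Proof.
intros H. apply is_RInt_C; simpl.
- apply (is_RInt_minus (V := R_NormedModule)).
  apply (is_RInt_scal (V:=R_NormedModule) _ _ _ _ _ (is_RInt_C_fst _ _ _ _ H)).
  apply (is_RInt_scal (V:=R_NormedModule) _ _ _ _ _ (is_RInt_C_snd _ _ _ _ H)).
- apply (is_RInt_plus (V := R_NormedModule)).
  apply (is_RInt_scal (V:=R_NormedModule) _ _ _ _ _ (is_RInt_C_snd _ _ _ _ H)).
  apply (is_RInt_scal (V:=R_NormedModule) _ _ _ _ _ (is_RInt_C_fst _ _ _ _ H)).
Qed.

Lemma is_RInt_Cplus (f g : R -> C) a b l1 l2 :
  @is_RInt CV f a b l1 -> @is_RInt CV g a b l2 ->
  @is_RInt CV (fun t => Cplus (f t) (g t)) a b (Cplus l1 l2).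
Proof.
intros H1 H2. apply is_RInt_C; simpl.
- apply (is_RInt_plus (V := R_NormedModule)); apply is_RInt_C_fst; auto.
- apply (is_RInt_plus (V := R_NormedModule)); apply is_RInt_C_snd; auto.
Qed.

Lemma is_RInt_Cext (f g : R -> C) a b l :
  (forall t, f t = g t) -> @is_RInt CV f a b l -> @is_RInt CV g a b l.
Proof. intros E H. apply (is_RInt_ext f g); auto. Qed.

Lemma C_cont_RInt (f : R -> C) a b :
  (forall z, Rmin a b <= z <= Rmax a b -> filterlim f (locally z) (locally (f z))) ->
  @ex_RInt CV f a b.
Proof.
intros H. apply (ex_RInt_continuous (V:=CV)). intros z Hz. apply H; auto.
Qed.

Lemma Cmod_small_zero (c K q : R) : 0 <= c -> 0 <= K -> Rabs q < 1 ->
  (forall m : nat, c <= K * (Rabs q) ^ m) -> c = 0.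
Proof.
intros Hc HK Hq H. destruct (Req_dec c 0) as [E|E]; auto.
assert (Hc' : 0 < c) by lra.
destruct (pow_lt_1_zero q Hq (c / (K + 1))) as [N HN].
{ apply Rdiv_lt_0_compat; lra. }
specialize (HN N (le_n _)). specialize (H N).
rewrite <- RPow_abs in HN.
assert (K * Rabs q ^ N <= K * (c / (K+1))).
{ apply Rmult_le_compat_l; lra. }
assert (K * (c / (K+1)) < c).
{ apply (Rmult_lt_reg_r (K+1)). lra. field_simplify; lra. }
lra.
Qed.

Lemma Cpow_nz (r : C) m : r <> 0%C -> Cpow r m <> 0%C.
Proof. intros H. induction m; simpl. intro E. injection E; lra. apply Cmult_neq_0; auto. Qed.

Lemma Cmod_Cpow_le (r : C) m : Cmod (Cpow r m) = Cmod r ^ m.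
Proof. apply Cmod_pow. Qed.

Section Seq.
Variables (J : Z -> C) (A : C) (B : R) (r : C) (Mb : R) (E0 : C).
Hypothesis HB : 0 < B.
Hypothesis Hr : Cmod r < 1.
Hypothesis Heq : (RtoC B * r * r - RtoC 2 * A * r + RtoC B = 0)%C.
Hypothesis Hsym : forall n, J (- n)%Z = J n.
Hypothesis Hbd : forall n, Cmod (J n) <= Mb.
Hypothesis Hrec : forall n, n <> 0%Z ->
  (RtoC 2 * A * J n - RtoC B * (J (n + 1)%Z + J (n - 1)%Z) = 0)%C.
Hypothesis Hrec0 : (RtoC 2 * A * J 0%Z - RtoC B * (J 1%Z + J (-1)%Z) = E0)%C.
Hypothesis HE0 : E0 <> 0%C.

Lemma RtoC_nz (x : R) : x <> 0 -> RtoC x <> 0%C.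
Proof. intros H E. injection E. auto. Qed.

Lemma r_nz : r <> 0%C.
Proof.
intros E. rewrite E in Heq. assert (RtoC B = 0%C).
{ rewrite <- Heq. ring. }
apply (RtoC_nz B); auto; lra.
Qed.

Let u (m : nat) : C := (J (Z.of_nat (S m)) - r * J (Z.of_nat m))%C.

Lemma u_step m : (u (S m) * r = u m)%C.
Proof.
unfold u.
assert (H1 := Hrec (Z.of_nat (S m)) ltac:(lia)).
replace (Z.of_nat (S m) + 1)%Z with (Z.of_nat (S (S m))) in H1 by lia.
replace (Z.of_nat (S m) - 1)%Z with (Z.of_nat m) in H1 by lia.
set (J2 := J (Z.of_nat (S (S m)))) in *.
set (J1 := J (Z.of_nat (S m))) in *.
set (J0 := J (Z.of_nat m)) in *.
assert (E : (RtoC B * ((J2 - r * J1) * r - (J1 - r * J0)) =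
   - r * (RtoC 2 * A * J1 - RtoC B * (J2 + J0)) - J1 * (RtoC B * r * r - RtoC 2 * A * r + RtoC B))%C)
  by ring.
rewrite H1, Heq in E.
assert (E' : (RtoC B * ((J2 - r * J1) * r - (J1 - r * J0)) = 0)%C).
{ rewrite E. ring. }
assert (HBn : RtoC B <> 0%C) by (apply RtoC_nz; lra).
assert (((J2 - r * J1) * r - (J1 - r * J0)) = 0)%C.
{ replace ((J2 - r * J1) * r - (J1 - r * J0))%C with
    (/ RtoC B * (RtoC B * ((J2 - r * J1) * r - (J1 - r * J0))))%C by (field; auto).
  rewrite E'. ring. }
replace ((J2 - r * J1) * r)%C with (((J2 - r * J1) * r - (J1 - r * J0)) + (J1 - r * J0))%C by ring.
rewrite H. ring.
Qed.

Lemma u_pow m : (u m * Cpow r m = u 0)%C.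
Proof.
induction m. simpl. ring.
rewrite <- IHm. rewrite <- (u_step m). simpl. ring.
Qed.

Lemma Mb_pos : 0 <= Mb.
Proof. apply Rle_trans with (Cmod (J 0%Z)). apply Cmod_ge_0. auto. Qed.

Lemma u_bound m : Cmod (u m) <= 2 * Mb.
Proof.
unfold u. unfold Cminus. eapply Rle_trans. apply Cmod_triangle.
rewrite Cmod_opp, Cmod_mult.
assert (Cmod r * Cmod (J (Z.of_nat m)) <= 1 * Mb).
{ apply Rmult_le_compat; auto using Cmod_ge_0; lra. }
specialize (Hbd (Z.of_nat (S m))). lra.
Qed.

Lemma u0_zero : u 0 = 0%C.
Proof.
apply Cmod_eq_0. apply (Cmod_small_zero _ (2 * Mb) (Cmod r)).
apply Cmod_ge_0. generalize Mb_pos; lra.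
rewrite Rabs_pos_eq; auto using Cmod_ge_0.
intros m. rewrite <- (u_pow m), Cmod_mult, Cmod_pow.
rewrite Rabs_pos_eq by apply Cmod_ge_0.
apply Rmult_le_compat_r. apply pow_le, Cmod_ge_0. apply u_bound.
Qed.

Lemma u_zero m : u m = 0%C.
Proof.
assert (H := u_pow m). rewrite u0_zero in H.
destruct (Ceq_dec (u m) 0%C) as [E|E]; auto.
exfalso. apply (Cmult_neq_0 _ _ E (Cpow_nz r m r_nz)). auto.
Qed.

Lemma J_nat m : J (Z.of_nat m) = (Cpow r m * J 0%Z)%C.
Proof.
induction m. simpl. ring.
assert (H := u_zero m). unfold u in H.
replace (J (Z.of_nat (S m))) with (r * J (Z.of_nat m))%C.
rewrite IHm. simpl. ring.
replace (J (Z.of_nat (S m))) with ((J (Z.of_nat (S m)) - r * J (Z.of_nat m)) + r * J (Z.of_nat m))%C by ring.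
rewrite H. ring.
Qed.

Lemma J_all n : J n = (Cpow r (Z.abs_nat n) * J 0%Z)%C.
Proof.
destruct (Z_le_gt_dec 0 n).
- rewrite <- J_nat. f_equal. lia.
- rewrite <- J_nat. rewrite <- Hsym. f_equal. lia.
Qed.

Lemma J0_val : (J 0%Z * (RtoC 2 * (A - RtoC B * r)) = E0)%C.
Proof.
rewrite <- Hrec0. rewrite (J_all 1), (J_all (-1)). simpl. ring.
Qed.

Lemma J_closed n : (A - RtoC B * r)%C <> 0%C /\
  J n = (Cpow r (Z.abs_nat n) * (E0 / (RtoC 2 * (A - RtoC B * r))))%C.
Proof.
assert (Hn : (A - RtoC B * r)%C <> 0%C).
{ intro E. apply HE0. rewrite <- J0_val, E. ring. }
split; auto.
rewrite J_all. f_equal. rewrite <- J0_val. field. assert (RtoC 2 <> 0%C) by (apply RtoC_nz; lra). tauto.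
Qed.

End Seq.

Definition Dk (A : C) (B k : R) : C := Cminus A (RtoC (B * cos k)).
Definition fk (A : C) (B : R) (n : Z) (k : R) : C := Cdiv (cexpi (k * IZR n)) (Dk A B k).

Lemma cexpi_plus a b : cexpi (a + b) = Cmult (cexpi a) (cexpi b).
Proof. unfold cexpi, Cmult; simpl. rewrite cos_plus, sin_plus. f_equal; ring. Qed.

Lemma Cmod_cexpi t : Cmod (cexpi t) = 1.
Proof.
unfold Cmod, cexpi; simpl.
replace (cos t * (cos t * 1) + sin t * (sin t * 1)) with 1. apply sqrt_1.
generalize (sin2_cos2 t). unfold Rsqr. intros; nra.
Qed.

Lemma cexpi_nz t : cexpi t <> 0%C.
Proof. intro E. generalize (Cmod_cexpi t). rewrite E, Cmod_0. lra. Qed.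

Lemma lim_id_mult (z c : R) : filterlim (fun k : R => k * c) (locally z) (locally (z * c)).
Proof. apply lim_mult. apply filterlim_id. apply lim_const. Qed.

Lemma cexpi_lim (f : R -> R) (F : (R -> Prop) -> Prop) {FF : Filter F} a :
  filterlim f F (locally a) -> filterlim (fun t => cexpi (f t)) F (locally (cexpi a)).
Proof.
intros H. apply C_lim; simpl.
apply (lim_comp_der f cos); auto. auto_derive; auto.
apply (lim_comp_der f sin); auto. auto_derive; auto.
Qed.

Lemma Dk_lim A B z : filterlim (Dk A B) (locally z) (locally (Dk A B z)).
Proof.
unfold Dk. apply C_lim_minus. apply C_lim_const. apply C_lim_RtoC.
apply lim_mult. apply lim_const. apply (lim_comp_der (fun k => k) cos). auto_derive; auto.
apply filterlim_id.
Qed.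

Section Lat.
Variables (A : C) (B : R) (r : C).
Hypothesis HB : 0 < B.
Hypothesis Hr : Cmod r < 1.
Hypothesis Heq : (RtoC B * r * r - RtoC 2 * A * r + RtoC B = 0)%C.

Lemma D_nz k : Dk A B k <> 0%C.
Proof.
set (e := cexpi k). set (e' := cexpi (- k)).
assert (Hs : (e + e' = RtoC 2 * RtoC (cos k))%C).
{ unfold e, e', cexpi, Cplus, Cmult, RtoC; simpl. rewrite cos_neg, sin_neg. f_equal; ring. }
assert (Hp : (e * e' = 1)%C).
{ unfold e, e', cexpi, Cmult; simpl. rewrite cos_neg, sin_neg.
  generalize (sin2_cos2 k); unfold Rsqr; intro. unfold RtoC. f_equal; nra. }
assert (Hid : (RtoC 2 * r * Dk A B k = RtoC B * (1 - r * e) * (1 - r * e'))%C).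
{ replace (RtoC B * (1 - r * e) * (1 - r * e'))%C with
     (RtoC B * (1 - r * (e + e') + r * r * (e * e')))%C by ring.
  rewrite Hs, Hp. unfold Dk. rewrite (RtoC_mult B (cos k)).
  replace (RtoC 2 * r * (A - RtoC B * RtoC (cos k)))%C with
    (- (RtoC B * r * r - RtoC 2 * A * r + RtoC B) + RtoC B * (1 - r * (RtoC 2 * RtoC (cos k)) + r * r * 1))%C by ring.
  rewrite Heq. ring. }
assert (Hf : forall t, 0 < Cmod (1 - r * cexpi t)%C).
{ intros t. assert (Cmod 1 <= Cmod (1 - r * cexpi t)%C + Cmod (r * cexpi t)%C).
  { replace (Cmod (RtoC 1)) with (Cmod ((1 - r * cexpi t) + r * cexpi t)%C) by (f_equal; ring). apply Cmod_triangle. }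
  rewrite Cmod_1, Cmod_mult, Cmod_cexpi in H. lra. }
intro E. assert (Hz : Cmod (RtoC 2 * r * Dk A B k)%C = 0).
{ rewrite E. rewrite Cmult_0_r. apply Cmod_0. }
rewrite Hid, !Cmod_mult, Cmod_R, Rabs_pos_eq in Hz by lra.
generalize (Hf k) (Hf (-k)); intros H1 H2. fold e in H1. fold e' in H2.
assert (0 < B * Cmod (1 - r * e)%C * Cmod (1 - r * e')%C).
{ apply Rmult_lt_0_compat; auto. apply Rmult_lt_0_compat; auto. }
lra.
Qed.

Lemma fk_lim n z : filterlim (fk A B n) (locally z) (locally (fk A B n z)).
Proof.
unfold fk. apply C_lim_div. apply D_nz.
apply (cexpi_lim (fun k => k * IZR n) (locally z)). apply lim_id_mult. apply Dk_lim.
Qed.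

Lemma fk_ex n a b : @ex_RInt CV (fk A B n) a b.
Proof. apply C_cont_RInt. intros; apply fk_lim. Qed.

Definition Jn (n : Z) : C := @RInt CV (fk A B n) 0 (2 * PI).

End Lat.

Lemma sin_2PI_n n : sin (2 * PI * IZR n) = 0.
Proof. apply sin_eq_0_1. exists (2 * n)%Z. rewrite mult_IZR. ring. Qed.

Lemma cos_2PI_n n : cos (2 * PI * IZR n) = 1.
Proof.
replace (2 * PI * IZR n) with (2 * (IZR n * PI)) by ring.
rewrite cos_2a_sin. rewrite sin_eq_0_1. ring. exists n; auto.
Qed.

Lemma cexpi_2PI_n n : cexpi (2 * PI * IZR n) = 1%C.
Proof. unfold cexpi. rewrite sin_2PI_n, cos_2PI_n. reflexivity. Qed.

Definition Eint (n : Z) : C := if Z.eq_dec n 0 then RtoC (2 * PI) else RtoC 0.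

Lemma is_RInt_R_val (f : R -> R) a b l l' : l = l' -> is_RInt f a b l -> is_RInt f a b l'.
Proof. intros ->; auto. Qed.

Lemma int_cexpi n : @is_RInt CV (fun k => cexpi (k * IZR n)) 0 (2 * PI) (Eint n).
Proof.
unfold Eint. destruct (Z.eq_dec n 0) as [E|E].
- subst. apply is_RInt_C; simpl.
  + apply (is_RInt_ext (fun _ => 1)). intros; rewrite Rmult_0_r, cos_0; auto.
    eapply is_RInt_R_val. 2: apply (@is_RInt_const R_NormedModule).
    unfold scal; simpl; unfold mult; simpl; ring.
  + apply (is_RInt_ext (fun _ => 0)). intros; rewrite Rmult_0_r, sin_0; auto.
    eapply is_RInt_R_val. 2: apply (@is_RInt_const R_NormedModule).
    unfold scal; simpl; unfold mult; simpl; ring.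
- assert (Hn : IZR n <> 0) by (apply not_0_IZR; auto).
  apply is_RInt_C; simpl.
  + eapply is_RInt_R_val.
    2: apply (is_RInt_derive (fun k => sin (k * IZR n) / IZR n) (fun k => cos (k * IZR n))).
    * unfold minus, plus, opp; simpl. rewrite Rmult_0_l, sin_0.
      replace (2 * PI * IZR n) with (2 * PI * IZR n) by ring. rewrite sin_2PI_n. field; auto.
    * intros x _. auto_derive; auto. field; auto.
    * intros x _. apply (ex_derive_continuous (fun k => cos (k * IZR n))). auto_derive; auto.
  + eapply is_RInt_R_val.
    2: apply (is_RInt_derive (fun k => - cos (k * IZR n) / IZR n) (fun k => sin (k * IZR n))).
    * unfold minus, plus, opp; simpl. rewrite Rmult_0_l, cos_0. rewrite cos_2PI_n. field; auto.
    * intros x _. auto_derive; auto. field; auto.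
    * intros x _. apply (ex_derive_continuous (fun k => sin (k * IZR n))). auto_derive; auto.
Qed.

Section Lat2.
Variables (A : C) (B : R) (r : C).
Hypothesis HB : 0 < B.
Hypothesis Hr : Cmod r < 1.
Hypothesis Heq : (RtoC B * r * r - RtoC 2 * A * r + RtoC B = 0)%C.

Lemma pointwise_rec n k :
  (RtoC 2 * A * fk A B n k + - RtoC B * (fk A B (n + 1) k + fk A B (n - 1) k))%C
  = (RtoC 2 * cexpi (k * IZR n))%C.
Proof.
unfold fk. rewrite plus_IZR, minus_IZR.
replace (k * (IZR n + 1)) with (k * IZR n + k) by ring.
replace (k * (IZR n - 1)) with (k * IZR n + - k) by ring.
rewrite !cexpi_plus.
assert (HD := D_nz A B r HB Hr Heq k).
set (e := cexpi (k * IZR n)). set (e1 := cexpi k). set (e2 := cexpi (- k)).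
assert (Hs : (e1 + e2 = RtoC 2 * RtoC (cos k))%C).
{ unfold e1, e2, cexpi, Cplus, Cmult, RtoC; simpl. rewrite cos_neg, sin_neg. f_equal; ring. }
set (D := Dk A B k) in *.
replace (RtoC 2 * A * (e / D) + - RtoC B * (e * e1 / D + e * e2 / D))%C
  with (e * (RtoC 2 * A - RtoC B * (e1 + e2)) / D)%C by (field; auto).
rewrite Hs.
replace (RtoC 2 * A - RtoC B * (RtoC 2 * RtoC (cos k)))%C with (RtoC 2 * D)%C.
field; auto.
unfold D, Dk. rewrite (RtoC_mult B (cos k)). ring.
Qed.

Lemma rec n : (RtoC 2 * A * Jn A B n - RtoC B * (Jn A B (n + 1) + Jn A B (n - 1)) = RtoC 2 * Eint n)%C.
Proof.
assert (H1 := RInt_correct _ _ _ (fk_ex A B r HB Hr Heq n 0 (2 * PI))).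
assert (H2 := RInt_correct _ _ _ (fk_ex A B r HB Hr Heq (n + 1) 0 (2 * PI))).
assert (H3 := RInt_correct _ _ _ (fk_ex A B r HB Hr Heq (n - 1) 0 (2 * PI))).
assert (Hc := is_RInt_Cplus _ _ _ _ _ _ (is_RInt_Cmult_l _ _ _ _ (RtoC 2 * A) H1)
   (is_RInt_Cmult_l _ _ _ _ (- RtoC B) (is_RInt_Cplus _ _ _ _ _ _ H2 H3))).
assert (He := is_RInt_Cmult_l _ _ _ _ (RtoC 2) (int_cexpi n)).
apply (is_RInt_Cext _ _ _ _ _ (fun k => eq_sym (pointwise_rec n k))) in He.
assert (U1 := is_RInt_unique _ _ _ _ Hc). assert (U2 := is_RInt_unique _ _ _ _ He).
rewrite U1 in U2. unfold Jn. rewrite <- U2. ring.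
Qed.

Lemma fk_wrap n y : fk A B n (-1 * y + 2 * PI) = fk A B (- n) y.
Proof.
unfold fk, Dk. f_equal.
- replace ((-1 * y + 2 * PI) * IZR n) with (y * IZR (- n) + 2 * PI * IZR n)
    by (rewrite opp_IZR; ring).
  rewrite cexpi_plus, cexpi_2PI_n. ring.
- f_equal. f_equal. f_equal.
  rewrite cos_plus, cos_2PI, sin_2PI. replace (-1 * y) with (- y) by ring.
  rewrite cos_neg. ring.
Qed.

Lemma Jsym n : Jn A B (- n) = Jn A B n.
Proof.
assert (Hex := fk_ex A B r HB Hr Heq n (-1 * 0 + 2 * PI) (-1 * (2 * PI) + 2 * PI)).
assert (H := @RInt_comp_lin CV (fk A B n) (-1) (2 * PI) 0 (2 * PI) Hex).
replace (-1 * 0 + 2 * PI) with (2 * PI) in H by ring.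
replace (-1 * (2 * PI) + 2 * PI) with 0 in H by ring.
rewrite (@RInt_ext CV _ (fun y => @scal R_Ring (NormedModule.ModuleSpace R_AbsRing CV) (-1) (fk A B (- n) y))) in H.
2: { intros; rewrite fk_wrap; auto. }
assert (H2 : @RInt CV (fun y => @scal R_Ring (NormedModule.ModuleSpace R_AbsRing CV) (-1) (fk A B (- n) y)) 0 (2 * PI)
   = @scal R_Ring (NormedModule.ModuleSpace R_AbsRing CV) (-1) (Jn A B (- n))).
{ apply (@RInt_scal CV). apply (fk_ex A B r HB Hr Heq). }
assert (H1 : @RInt CV (fk A B n) (2 * PI) 0 = opp (Jn A B n)).
{ symmetry. apply (@opp_RInt_swap CV). apply (fk_ex A B r HB Hr Heq). }
rewrite H2, H1 in H.
revert H. generalize (Jn A B (- n)) (Jn A B n). intros [a1 a2] [b1 b2] H.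
unfold scal, opp in H; simpl in H. unfold prod_scal, prod_opp in H; simpl in H.
unfold scal, opp, mult in H; simpl in H. unfold Copp in H; simpl in H. unfold mult in H; simpl in H. injection H; intros. f_equal; lra.
Qed.

End Lat2.

Lemma normCV (z : C) : @norm R_AbsRing (CompleteNormedModule.NormedModule R_AbsRing CV) z = Cmod z.
Proof. symmetry. apply Cmod_norm. Qed.

Lemma Cmod_pos (a : C) : a <> 0%C -> 0 < fst a ^ 2 + snd a ^ 2.
Proof.
intros Ha. destruct a as [x y]; simpl.
destruct (Req_dec x 0); destruct (Req_dec y 0); subst.
- exfalso; apply Ha; reflexivity.
- assert (0 < y ^ 2) by (apply pow2_gt_0; auto). nra.
- assert (0 < x ^ 2) by (apply pow2_gt_0; auto). nra.
- assert (0 < x ^ 2) by (apply pow2_gt_0; auto). nra.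
Qed.

Lemma lim_Cmod {T} {F : (T -> Prop) -> Prop} {FF : Filter F} (f : T -> C) (a : C) :
  a <> 0%C -> filterlim f F (locally a) -> filterlim (fun t => Cmod (f t)) F (locally (Cmod a)).
Proof.
intros Ha H. unfold Cmod.
apply (lim_comp_der (fun t => fst (f t) ^ 2 + snd (f t) ^ 2) sqrt).
- auto_derive. apply Cmod_pos; auto.
- apply lim_plus.
  + apply (lim_comp_der (fun t => fst (f t)) (fun x => x ^ 2)). auto_derive; auto. apply C_lim_fst; auto.
  + apply (lim_comp_der (fun t => snd (f t)) (fun x => x ^ 2)). auto_derive; auto. apply C_lim_snd; auto.
Qed.

Section Lat3.
Variables (A : C) (B : R) (r : C).
Hypothesis HB : 0 < B.
Hypothesis Hr : Cmod r < 1.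
Hypothesis Heq : (RtoC B * r * r - RtoC 2 * A * r + RtoC B = 0)%C.

Definition gD (k : R) : R := / Cmod (Dk A B k).

Lemma gD_ex : ex_RInt gD 0 (2 * PI).
Proof.
apply (ex_RInt_continuous (V := R_CompleteNormedModule)). intros z _.
unfold gD. apply (lim_inv (fun k => Cmod (Dk A B k))).
- apply Rgt_not_eq. apply Cmod_gt_0. apply (D_nz A B r HB Hr Heq).
- apply lim_Cmod. apply (D_nz A B r HB Hr Heq). apply Dk_lim.
Qed.

Lemma J_bound n : Cmod (Jn A B n) <= RInt gD 0 (2 * PI).
Proof.
rewrite <- normCV.
apply (@norm_RInt_le CV (fk A B n) gD 0 (2 * PI)).
- generalize PI_RGT_0; lra.
- intros x _. rewrite normCV. unfold fk, gD. rewrite Cmod_div by apply (D_nz A B r HB Hr Heq).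
  rewrite Cmod_cexpi. unfold Rdiv. rewrite Rmult_1_l. apply Rle_refl.
- apply (RInt_correct (V := CV)). apply (fk_ex A B r HB Hr Heq).
- apply (RInt_correct (V := R_CompleteNormedModule)). apply gD_ex.
Qed.

Theorem lattice_formula n :
  (A - RtoC B * r)%C <> 0%C /\
  Cmult (RtoC (/ (2 * PI))) (@RInt CV (fk A B n) 0 (2 * PI)) =
  Cdiv (Cpow r (Z.abs_nat n)) (A - RtoC B * r).
Proof.
assert (HPI : 0 < PI) by apply PI_RGT_0.
assert (H0 : (RtoC 2 * A * Jn A B 0%Z - RtoC B * (Jn A B 1%Z + Jn A B (-1)%Z)
           = RtoC 2 * RtoC (2 * PI))%C).
{ assert (Hq := rec A B r HB Hr Heq 0). replace (0 + 1)%Z with 1%Z in Hq by reflexivity.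
  replace (0 - 1)%Z with (-1)%Z in Hq by reflexivity. rewrite Hq. reflexivity. }
assert (HE : (RtoC 2 * RtoC (2 * PI))%C <> 0%C).
{ apply Cmult_neq_0; apply RtoC_nz; lra. }
assert (Hrec : forall m, m <> 0%Z ->
   (RtoC 2 * A * Jn A B m - RtoC B * (Jn A B (m + 1) + Jn A B (m - 1)) = 0)%C).
{ intros m Hm. rewrite (rec A B r HB Hr Heq m). unfold Eint.
  destruct (Z.eq_dec m 0); [contradiction|]. unfold RtoC. apply injective_projections; simpl; ring. }
destruct (J_closed (Jn A B) A B r (RInt gD 0 (2 * PI)) (RtoC 2 * RtoC (2 * PI))%C HB Hr Heq
    (Jsym A B r HB Hr Heq) J_bound Hrec H0 HE n) as [Hn Hv].
- split; auto. fold (Jn A B n). rewrite Hv.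
  assert (RtoC 2 <> 0%C) by (apply RtoC_nz; lra).
  assert (RtoC (2 * PI) <> 0%C) by (apply RtoC_nz; lra).
  rewrite (RtoC_mult 2 PI) in *.
  replace (RtoC (/ (2 * PI))) with (/ (RtoC 2 * RtoC PI))%C.
  field. repeat split; auto. intro E; rewrite E in *; apply H1; ring.
  rewrite <- RtoC_mult. unfold Cinv, RtoC; simpl. apply injective_projections; simpl; field; lra.
Qed.

End Lat3.

Lemma ball_R (a e b : R) : ball a e b <-> Rabs (b - a) < e.
Proof. split; intro H; exact H. Qed.

Section Q.
Context {T : Type} {F : (T -> Prop) -> Prop} {FF : Filter F}.

Lemma lim_quot (f : R -> R) l (y : T -> R) :
  f 0 = 0 -> derivable_pt_lim f 0 l -> filterlim y F (locally 0) ->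
  F (fun t => y t <> 0) -> filterlim (fun t => f (y t) / y t) F (locally l).
Proof.
intros H0 Hd Hy Hnz. apply filterlim_locally. intros eps.
destruct (Hd eps (cond_pos eps)) as [d Hdd].
assert (Hb := proj1 (filterlim_locally y 0) Hy d).
generalize (filter_and _ _ Hb Hnz). apply filter_imp. intros t [Hbt Hn].
apply ball_R. assert (Hbt2 : Rabs (y t - 0) < d) by exact Hbt. rewrite Rminus_0_r in Hbt2. rename Hbt2 into Hbt0.
specialize (Hdd (y t) Hn Hbt0). rewrite Rplus_0_l, H0, Rminus_0_r in Hdd. exact Hdd.
Qed.

Lemma ev_gt (g : T -> R) L a : filterlim g F (locally L) -> a < L -> F (fun t => a < g t).
Proof.
intros Hg Ha. assert (Hp : 0 < L - a) by lra.
assert (H := proj1 (filterlim_locally g L) Hg (mkposreal _ Hp)).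
revert H. apply filter_imp. intros t Hb. assert (Hb2 : Rabs (g t - L) < pos (mkposreal _ Hp)) by exact Hb. simpl in Hb2. clear Hb. rename Hb2 into Hb.
apply Rabs_def2 in Hb. lra.
Qed.

Lemma ev_lt (g : T -> R) L a : filterlim g F (locally L) -> L < a -> F (fun t => g t < a).
Proof.
intros Hg Ha. assert (Hp : 0 < a - L) by lra.
assert (H := proj1 (filterlim_locally g L) Hg (mkposreal _ Hp)).
revert H. apply filter_imp. intros t Hb. assert (Hb2 : Rabs (g t - L) < pos (mkposreal _ Hp)) by exact Hb. simpl in Hb2. clear Hb. rename Hb2 into Hb.
apply Rabs_def2 in Hb. lra.
Qed.

Lemma lim_Rabs (g : T -> R) L : filterlim g F (locally L) ->
  filterlim (fun t => Rabs (g t)) F (locally (Rabs L)).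
Proof.
intros H. eapply filterlim_comp. exact H. apply (filterlim_Rabs (Finite L)).
Qed.

End Q.

Lemma at_right_pos : at_right 0 (fun h => 0 < h).
Proof. exists (mkposreal 1 Rlt_0_1). intros; auto. Qed.

Lemma lim_at_right_id : filterlim (fun h : R => h) (at_right 0) (locally 0).
Proof. intros P [eps HP]. exists eps. intros y Hy _. apply HP. exact Hy. Qed.

Lemma INR_abs_nat (z : Z) : INR (Z.abs_nat z) = Rabs (IZR z).
Proof. rewrite INR_IZR_INZ, Zabs2Nat.id_abs, abs_IZR. reflexivity. Qed.

Lemma Cpow_cexpi t m : Cpow (cexpi t) m = cexpi (INR m * t).
Proof.
induction m. simpl. unfold cexpi. rewrite Rmult_0_l, cos_0, sin_0. reflexivity.
simpl Cpow. rewrite IHm. rewrite <- cexpi_plus. f_equal. rewrite S_INR. ring.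
Qed.

Lemma Cpow_RtoC (x : R) m : Cpow (RtoC x) m = RtoC (x ^ m).
Proof.
induction m. reflexivity. simpl. rewrite IHm. unfold Cmult, RtoC; simpl. f_equal; ring.
Qed.

Definition cc (Om beta h : R) : R := om0 Om h ^ 2 / xi beta h ^ 2.
Definition AA (Om beta h : R) (z : C) : C :=
  Cminus (RtoC (cc Om beta h * (1 + xi beta h ^ 2))) (Cmult z z).
Definition BB (Om beta h : R) : R := 2 * cc Om beta h * xi beta h.

Lemma Gh_eq Om beta h n z :
  Gh Om beta h n z = Cmult (RtoC (/ (2 * PI))) (@RInt CV (fk (AA Om beta h z) (BB Om beta h) n) 0 (2 * PI)).
Proof.
unfold Gh. f_equal. apply RInt_ext. intros k _. unfold fk. f_equal.
unfold Dk, AA, BB, omh2. fold (cc Om beta h).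
unfold Cminus, Cplus, Copp, RtoC; simpl. apply injective_projections; simpl.
replace (sin k * (sin k * 1)) with (1 - cos k * cos k) by (generalize (sin2_cos2 k); unfold Rsqr; intros; lra). ring.
ring.
Qed.

Definition A0 (Om beta om h : R) : R := cc Om beta h * (1 + xi beta h ^ 2) - om ^ 2.
Definition P1 Om beta om h := A0 Om beta om h - BB Om beta h.
Definition P2 Om beta om h := h ^ 2 * (A0 Om beta om h + BB Om beta h).
Definition P3 Om beta h := h ^ 2 * BB Om beta h.

Lemma xi_pos beta h : 0 < xi beta h.
Proof. apply exp_pos. Qed.

Lemma BB_pos Om beta h : 0 < Om -> 0 < h -> 0 < BB Om beta h.
Proof.
intros. unfold BB, cc, om0. assert (0 < xi beta h) by apply xi_pos.
assert (0 < Om / h) by (apply Rdiv_lt_0_compat; auto).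
assert (0 < (Om / h) ^ 2) by (apply pow_lt; auto).
assert (0 < xi beta h ^ 2) by (apply pow_lt; auto).
assert (0 < (Om / h) ^ 2 / xi beta h ^ 2) by (apply Rdiv_lt_0_compat; auto).
nra.
Qed.

Lemma P1_eq Om beta om h : h <> 0 ->
  P1 Om beta om h = Om ^ 2 * ((xi beta h - 1) / h) ^ 2 / xi beta h ^ 2 - om ^ 2.
Proof.
intros Hh. assert (xi beta h <> 0) by (apply Rgt_not_eq, xi_pos).
unfold P1, A0, BB, cc, om0. field; auto.
Qed.

Lemma P2_eq Om beta om h : h <> 0 ->
  P2 Om beta om h = Om ^ 2 * (1 + xi beta h) ^ 2 / xi beta h ^ 2 - h ^ 2 * om ^ 2.
Proof.
intros Hh. assert (xi beta h <> 0) by (apply Rgt_not_eq, xi_pos).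
unfold P2, A0, BB, cc, om0. field; auto.
Qed.

Lemma P3_eq Om beta h : h <> 0 -> P3 Om beta h = 2 * Om ^ 2 / xi beta h.
Proof.
intros Hh. assert (xi beta h <> 0) by (apply Rgt_not_eq, xi_pos).
unfold P3, BB, cc, om0. field; auto.
Qed.

Lemma ev_hpos : at_right 0 (fun h => 0 < h).
Proof. apply at_right_pos. Qed.

Lemma L_xi beta : filterlim (fun h => xi beta h) (at_right 0) (locally 1).
Proof.
unfold xi. rewrite <- exp_0.
apply (lim_comp_der (fun h => beta * h) exp). auto_derive; auto.
replace 0 with (beta * 0) at 2 by ring. apply lim_mult. apply lim_const. apply lim_at_right_id.
Qed.

Lemma L_e beta : filterlim (fun h => (xi beta h - 1) / h) (at_right 0) (locally beta).
Proof.
apply (lim_quot (fun t => exp (beta * t) - 1) beta (fun h => h)).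
- rewrite Rmult_0_r, exp_0. ring.
- apply is_derive_Reals. auto_derive; auto. rewrite Rmult_0_r, exp_0. ring.
- apply lim_at_right_id.
- generalize ev_hpos. apply filter_imp. intros; lra.
Qed.

Lemma lim_pow2 {T} {F : (T -> Prop) -> Prop} {FF : Filter F} (f : T -> R) a :
  filterlim f F (locally a) -> filterlim (fun t => f t ^ 2) F (locally (a ^ 2)).
Proof. intros H. apply (lim_comp_der f (fun x => x ^ 2)). auto_derive; auto. auto. Qed.

Lemma L_P1 Om beta om : filterlim (P1 Om beta om) (at_right 0) (locally (Om ^ 2 * beta ^ 2 - om ^ 2)).
Proof.
apply (lim_ext (fun h => Om ^ 2 * ((xi beta h - 1) / h) ^ 2 / xi beta h ^ 2 - om ^ 2)).
{ generalize ev_hpos. apply filter_imp. intros h Hh. rewrite P1_eq; auto; lra. }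
apply (lim_eq _ (Om ^ 2 * beta ^ 2 / 1 ^ 2 - om ^ 2)). field.
apply lim_minus. 2: apply lim_const.
unfold Rdiv. apply lim_mult. apply lim_mult. apply lim_const. apply lim_pow2, L_e.
apply lim_inv. lra. apply lim_pow2, L_xi.
Qed.

Lemma L_P2 Om beta om : filterlim (P2 Om beta om) (at_right 0) (locally (4 * Om ^ 2)).
Proof.
apply (lim_ext (fun h => Om ^ 2 * (1 + xi beta h) ^ 2 / xi beta h ^ 2 - h ^ 2 * om ^ 2)).
{ generalize ev_hpos. apply filter_imp. intros h Hh. rewrite P2_eq; auto; lra. }
apply (lim_eq _ (Om ^ 2 * (1 + 1) ^ 2 / 1 ^ 2 - 0 ^ 2 * om ^ 2)). field.
apply lim_minus.
unfold Rdiv. apply lim_mult. apply lim_mult. apply lim_const. apply lim_pow2, lim_plus, L_xi. apply lim_const.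
apply lim_inv. lra. apply lim_pow2, L_xi.
apply lim_mult. apply lim_pow2, lim_at_right_id. apply lim_const.
Qed.

Lemma L_P3 Om beta : filterlim (P3 Om beta) (at_right 0) (locally (2 * Om ^ 2)).
Proof.
apply (lim_ext (fun h => 2 * Om ^ 2 / xi beta h)).
{ generalize ev_hpos. apply filter_imp. intros h Hh. rewrite P3_eq; auto; lra. }
apply (lim_eq _ (2 * Om ^ 2 / 1)). field.
unfold Rdiv. apply lim_mult. apply lim_const. apply lim_inv. lra. apply L_xi.
Qed.

Lemma RtoC_mdiv (a b c : R) : c <> 0 ->
  Cmult (RtoC a) (Cdiv (RtoC b) (RtoC c)) = RtoC (a * b / c).
Proof.
intros Hc. unfold Cdiv, Cmult, Cinv, RtoC; simpl.
apply injective_projections; simpl; field; auto.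
Qed.

Lemma AA_real Om beta om h : AA Om beta h (RtoC om) = RtoC (A0 Om beta om h).
Proof.
unfold AA, A0, Cminus, Cplus, Copp, Cmult, RtoC; simpl.
apply injective_projections; simpl; ring.
Qed.

Lemma sqrt_val (Om beta om : R) : 0 < Om -> 0 < beta ^ 2 - om ^ 2 / Om ^ 2 ->
  sqrt ((Om ^ 2 * beta ^ 2 - om ^ 2) * (4 * Om ^ 2)) = 2 * Om ^ 2 * sqrt (beta ^ 2 - om ^ 2 / Om ^ 2).
Proof.
intros HO Hs.
set (s := sqrt (beta ^ 2 - om ^ 2 / Om ^ 2)).
assert (Hs2 : s * s = beta ^ 2 - om ^ 2 / Om ^ 2) by (apply sqrt_sqrt; lra).
assert (0 <= s) by apply sqrt_pos.
replace ((Om ^ 2 * beta ^ 2 - om ^ 2) * (4 * Om ^ 2)) with ((2 * Om ^ 2 * s) ^ 2).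
apply sqrt_pow2. assert (0 < Om ^ 2) by (apply pow_lt; auto). nra.
replace ((2 * Om ^ 2 * s) ^ 2) with (4 * Om ^ 2 * Om ^ 2 * (s * s)) by ring.
rewrite Hs2. field. lra.
Qed.

Lemma lim_ln_quot {T} {F : (T -> Prop) -> Prop} {FF : Filter F} (y : T -> R) :
  filterlim y F (locally 0) -> F (fun t => y t <> 0) ->
  filterlim (fun t => ln (1 + y t) / y t) F (locally 1).
Proof.
intros Hy Hn. apply (lim_quot (fun t => ln (1 + t)) 1 y); auto.
- rewrite Rplus_0_r. apply ln_1.
- apply is_derive_Reals. auto_derive. lra. field.
Qed.

Section Part1.
Variables (Om beta x om : R) (n : R -> Z).
Hypothesis HOm : 0 < Om.
Hypothesis Hbeta : 0 < beta.
Hypothesis Hn : filterlim (fun h => IZR (n h) * h) (at_right 0) (locally (Rabs x)).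
Hypothesis Hom : 0 <= om < beta * Om.

Let s1 := sqrt (beta ^ 2 - om ^ 2 / Om ^ 2).
Definition QQ h := sqrt (P1 Om beta om h * P2 Om beta om h).
Definition WW h := (QQ h - h * P1 Om beta om h) / P3 Om beta h.
Definition rr h := 1 - h * WW h.

Lemma s1_arg : 0 < beta ^ 2 - om ^ 2 / Om ^ 2.
Proof.
assert (om ^ 2 < (beta * Om) ^ 2) by (destruct Hom; nra).
assert (0 < Om ^ 2) by (apply pow_lt; auto).
apply Rlt_Rminus. apply (Rmult_lt_reg_r (Om ^ 2)); auto.
unfold Rdiv. rewrite Rmult_assoc, Rinv_l by lra. nra.
Qed.

Lemma s1_pos : 0 < s1.
Proof. apply sqrt_lt_R0, s1_arg. Qed.

Lemma L_QQ : filterlim QQ (at_right 0) (locally (2 * Om ^ 2 * s1)).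
Proof.
unfold s1. rewrite <- sqrt_val; auto. 2: apply s1_arg.
unfold QQ. apply (lim_comp_der (fun h => P1 Om beta om h * P2 Om beta om h) sqrt).
- auto_derive. assert (0 < Om ^ 2 * beta ^ 2 - om ^ 2).
  { assert (om ^ 2 < (beta * Om) ^ 2) by (destruct Hom; nra). nra. }
  assert (0 < Om ^ 2) by (apply pow_lt; auto). nra.
- apply lim_mult. apply L_P1. apply L_P2.
Qed.

Lemma L_WW : filterlim WW (at_right 0) (locally s1).
Proof.
unfold WW. apply (lim_eq _ ((2 * Om ^ 2 * s1 - 0 * (Om ^ 2 * beta ^ 2 - om ^ 2)) * / (2 * Om ^ 2))).
field. lra.
unfold Rdiv. apply lim_mult. apply lim_minus. apply L_QQ. apply lim_mult. apply lim_at_right_id. apply L_P1.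
apply lim_inv. assert (0 < Om ^ 2) by (apply pow_lt; auto). lra. apply L_P3.
Qed.

Lemma ev_P1 : at_right 0 (fun h => 0 < P1 Om beta om h).
Proof.
apply (ev_gt _ _ 0 (L_P1 Om beta om)).
assert (om ^ 2 < (beta * Om) ^ 2) by (destruct Hom; nra). nra.
Qed.

Lemma good_facts h : 0 < h -> 0 < P1 Om beta om h ->
  let B := BB Om beta h in let A := A0 Om beta om h in
  0 < B /\ 0 < QQ h /\ (QQ h / h) ^ 2 = A ^ 2 - B ^ 2 /\ rr h = (A - QQ h / h) / B /\
  0 < rr h < 1.
Proof.
intros Hh HP1 B A.
assert (HB : 0 < B) by (apply BB_pos; auto).
assert (HAB : A = P1 Om beta om h + B) by (unfold P1; fold A B; ring).
assert (HP2 : P2 Om beta om h = h ^ 2 * (P1 Om beta om h + 2 * B)) by (unfold P2; fold A B; rewrite HAB; ring).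
assert (Hh2 : 0 < h ^ 2) by (apply pow_lt; auto).
assert (HP2p : 0 < P2 Om beta om h) by (rewrite HP2; nra).
assert (HQ2 : QQ h * QQ h = P1 Om beta om h * P2 Om beta om h) by (apply sqrt_sqrt; nra).
assert (HQ : 0 < QQ h) by (apply sqrt_lt_R0; nra).
assert (HS2 : (QQ h / h) ^ 2 = A ^ 2 - B ^ 2).
{ replace ((QQ h / h) ^ 2) with (QQ h * QQ h / h ^ 2) by (field; lra).
  rewrite HQ2, HP2, HAB. field. lra. }
assert (Hr : rr h = (A - QQ h / h) / B).
{ unfold rr, WW, P3. fold B. rewrite HAB. field. split; lra. }
split; auto. split; auto. split; auto. split; auto.
set (S := QQ h / h) in *.
assert (HSp : 0 < S) by (unfold S; apply Rdiv_lt_0_compat; auto).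
rewrite Hr. split.
- apply Rdiv_lt_0_compat; auto. assert (S < A); [|lra].
  apply Rsqr_incrst_0; unfold Rsqr; try lra. nra.
- apply (Rmult_lt_reg_r B); auto. unfold Rdiv. rewrite Rmult_assoc, Rinv_l, Rmult_1_r by lra.
  assert (P1 Om beta om h < S); [|lra].
  apply Rsqr_incrst_0; unfold Rsqr; try lra. nra.
Qed.

Lemma ev_eq : at_right 0 (fun h =>
  RtoC (rr h ^ Z.abs_nat (n h) / QQ h) = Cmult (RtoC (/ h)) (Gh Om beta h (n h) (RtoC om))).
Proof.
generalize (filter_and _ _ ev_hpos ev_P1). apply filter_imp. intros h [Hh HP1].
destruct (good_facts h Hh HP1) as [HB [HQ [HS2 [Hr [Hr0 Hr1]]]]].
rewrite Gh_eq.
set (B := BB Om beta h) in *. set (A := A0 Om beta om h) in *.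
assert (Heq : (RtoC B * RtoC (rr h) * RtoC (rr h) - RtoC 2 * AA Om beta h (RtoC om) * RtoC (rr h) + RtoC B = 0)%C).
{ rewrite AA_real. fold A. unfold Cminus, Cplus, Copp, Cmult, RtoC; simpl.
  apply injective_projections; simpl; [|ring].
  rewrite Hr. replace (QQ h / h) with (QQ h / h) by reflexivity.
  set (S := QQ h / h) in *.
  assert (HBn : B <> 0) by lra.
  transitivity ((S ^ 2 - (A ^ 2 - B ^ 2)) / B).
  clearbody S A B. field; auto. rewrite HS2. field; auto. }
assert (Hrm : Cmod (RtoC (rr h)) < 1) by (rewrite Cmod_R, Rabs_pos_eq; lra).
destruct (lattice_formula (AA Om beta h (RtoC om)) B (RtoC (rr h)) HB Hrm Heq (n h)) as [Hnz Hv].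
fold B. rewrite Hv. rewrite Cpow_RtoC, AA_real. fold A.
replace (Cminus (RtoC A) (Cmult (RtoC B) (RtoC (rr h)))) with (RtoC (QQ h / h)).
rewrite RtoC_mdiv. f_equal. field. lra.
apply Rgt_not_eq. apply Rdiv_lt_0_compat; auto.
unfold Cminus, Cplus, Copp, Cmult, RtoC; simpl. apply injective_projections; simpl; [|ring].
rewrite Hr. field. lra.
Qed.

Lemma L_ln : filterlim (fun h => ln (rr h) / h) (at_right 0) (locally (- s1)).
Proof.
set (y := fun h => - h * WW h).
assert (Hy : filterlim y (at_right 0) (locally 0)).
{ unfold y. apply (lim_eq _ (- 0 * s1)). ring. apply lim_mult. apply lim_opp, lim_at_right_id. apply L_WW. }
assert (Hyn : at_right 0 (fun h => y h <> 0)).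
{ generalize (filter_and _ _ ev_hpos ev_P1). apply filter_imp. intros h [Hh HP1].
  destruct (good_facts h Hh HP1) as [_ [_ [_ [_ [Hr0 Hr1]]]]].
  unfold y. unfold rr in Hr1. lra. }
apply (lim_ext (fun h => ln (1 + y h) / y h * (- WW h))).
{ generalize (filter_and _ _ ev_hpos Hyn). apply filter_imp. intros h [Hh Hn0].
  unfold y in *. unfold rr. replace (1 + - h * WW h) with (1 - h * WW h) by ring.
  assert (WW h <> 0). { intro E. apply Hn0. rewrite E. ring. }
  field. split; auto. lra. }
apply (lim_eq _ (1 * - s1)). ring.
apply lim_mult. apply lim_ln_quot; auto. apply lim_opp, L_WW.
Qed.

Lemma L_m : filterlim (fun h => INR (Z.abs_nat (n h)) * h) (at_right 0) (locally (Rabs x)).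
Proof.
apply (lim_ext (fun h => Rabs (IZR (n h) * h))).
{ generalize ev_hpos. apply filter_imp. intros h Hh. rewrite INR_abs_nat, Rabs_mult.
  rewrite (Rabs_pos_eq h); lra. }
rewrite <- (Rabs_Rabsolu x). apply lim_Rabs. auto.
Qed.

Theorem part1 : filterlim (fun h => Cmult (RtoC (/ h)) (Gh Om beta h (n h) (RtoC om)))
       (at_right 0) (locally (gcont Om beta (Rabs x) om)).
Proof.
unfold gcont. destruct (Rlt_dec om (beta * Om)) as [_|Hc]; [|exfalso; lra].
fold s1.
apply (C_lim_ext _ _ _ ev_eq). apply C_lim_RtoC.
apply (lim_ext (fun h => exp ((INR (Z.abs_nat (n h)) * h) * (ln (rr h) / h)) / QQ h)).
{ generalize (filter_and _ _ ev_hpos ev_P1). apply filter_imp. intros h [Hh HP1].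
  destruct (good_facts h Hh HP1) as [_ [_ [_ [_ [Hr0 Hr1]]]]].
  rewrite <- Rpower_pow by auto. unfold Rpower. f_equal. f_equal. field. lra. }
assert (Hs := s1_pos).
apply (lim_eq _ (exp (Rabs x * - s1) * / (2 * Om ^ 2 * s1))).
{ replace (- Rabs x * s1) with (Rabs x * - s1) by ring. field. split; lra. }
unfold Rdiv. apply lim_mult.
- apply (lim_comp_der (fun h => INR (Z.abs_nat (n h)) * h * (ln (rr h) / h)) exp).
  auto_derive; auto. apply lim_mult. apply L_m. apply L_ln.
- apply lim_inv. assert (0 < Om ^ 2) by (apply pow_lt; auto). nra. apply L_QQ.
Qed.

End Part1.

Definition bp (al ga : R) := 1 - al ^ 2 + ga ^ 2.
Definition bq (al ga : R) := 2 * al * ga.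
Definition bm (al ga : R) := sqrt (bp al ga ^ 2 + bq al ga ^ 2).
Definition bu (al ga : R) := sqrt ((bm al ga + bp al ga) / 2).
Definition bv (al ga : R) := bq al ga / (2 * bu al ga).
Definition br (al ga : R) : C := (al - bv al ga, bu al ga - ga).

Lemma branch_facts al ga : 0 < ga ->
  0 < bu al ga /\ bu al ga ^ 2 - bv al ga ^ 2 = bp al ga /\ bu al ga * bv al ga = al * ga.
Proof.
intros Hg.
set (p := bp al ga). set (q := bq al ga).
assert (Hm2 : bm al ga * bm al ga = p ^ 2 + q ^ 2).
{ apply sqrt_sqrt. nra. }
assert (Hm0 : 0 <= bm al ga) by apply sqrt_pos.
assert (Hmp : 0 < bm al ga + p).
{ destruct (Rlt_dec 0 p). nra.
  assert (al <> 0). { intro E. unfold p, bp in n. rewrite E in n. nra. }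
  assert (0 < q ^ 2). { apply pow2_gt_0. unfold q, bq. apply Rmult_integral_contrapositive; split; [apply Rmult_integral_contrapositive; split; lra | lra]. }
  assert (- p < bm al ga); [|lra].
  apply Rsqr_incrst_0; unfold Rsqr; [rewrite Hm2; nra | lra | lra]. }
assert (Hu2 : bu al ga * bu al ga = (bm al ga + p) / 2) by (unfold bu; apply sqrt_sqrt; fold p; lra).
assert (Hu : 0 < bu al ga) by (unfold bu; apply sqrt_lt_R0; fold p; lra).
split; auto.
assert (Hv : bv al ga = q / (2 * bu al ga)) by reflexivity.
split.
- rewrite Hv. replace ((q / (2 * bu al ga)) ^ 2) with (q ^ 2 / (4 * (bu al ga * bu al ga))) by (field; lra).
  replace (bu al ga ^ 2) with (bu al ga * bu al ga) by ring.
  rewrite Hu2. apply (Rmult_eq_reg_r (2 * (bm al ga + p))). 2: lra.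
  field_simplify; try lra.
- rewrite Hv. unfold q, bq. field. lra.
Qed.

Lemma branch_eq al ga : 0 < ga ->
  let r := br al ga in
  fst r ^ 2 - snd r ^ 2 - 2 * (al * fst r + ga * snd r) + 1 = 0 /\
  2 * fst r * snd r - 2 * (al * snd r - ga * fst r) = 0.
Proof.
intros Hg r. destruct (branch_facts al ga Hg) as [Hu [H1 H2]].
unfold r, br; simpl. unfold bp in H1. split; nra.
Qed.

Lemma branch_small al ga : 0 < ga -> fst (br al ga) ^ 2 + snd (br al ga) ^ 2 < 1.
Proof.
intros Hg. destruct (branch_facts al ga Hg) as [Hu [H1 H2]].
unfold br; simpl. unfold bp in H1.
set (u := bu al ga) in *. set (v := bv al ga) in *.
assert (E4 : u ^ 2 * (u ^ 2 - ga ^ 2) = u ^ 2 * (1 - al ^ 2) + al ^ 2 * ga ^ 2).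
{ replace (al ^ 2 * ga ^ 2) with ((u * v) ^ 2) by (rewrite H2; ring).
  replace (u ^ 2 * (u ^ 2 - ga ^ 2)) with (u ^ 2 * (u ^ 2 - v ^ 2) + (u * v) ^ 2 - u ^ 2 * ga ^ 2) by ring.
  rewrite H1. ring. }
assert (Hug : ga < u).
{ destruct (Rlt_dec ga u) as [|Hn]; auto. exfalso.
  assert (u <= ga) by lra.
  assert (u ^ 2 <= ga ^ 2) by nra.
  assert (0 < u ^ 2) by nra.
  assert (u ^ 2 * (u ^ 2 - ga ^ 2) <= 0) by nra.
  assert (0 <= al ^ 2 * (ga ^ 2 - u ^ 2)) by nra.
  nra. }
assert (D : ga * ((al - v) ^ 2 + (u - ga) ^ 2 - 1) - 2 * (ga - u) * (v ^ 2 + ga ^ 2)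
   = ga * (u ^ 2 - v ^ 2 - (1 - al ^ 2 + ga ^ 2)) - 2 * v * (al * ga - u * v)) by ring.
rewrite H1, H2 in D.
assert (E : ga * ((al - v) ^ 2 + (u - ga) ^ 2 - 1) = 2 * (ga - u) * (v ^ 2 + ga ^ 2)).
{ apply Rminus_diag_uniq. rewrite D. ring. }
assert (2 * (ga - u) * (v ^ 2 + ga ^ 2) < 0).
{ assert (0 < v ^ 2 + ga ^ 2) by nra. nra. }
assert (ga * ((al - v) ^ 2 + (u - ga) ^ 2 - 1) < 0) by lra.
nra.
Qed.

Lemma br_lim {T} {F : (T -> Prop) -> Prop} {FF : Filter F} (al ga : T -> R) a0 :
  -1 < a0 < 1 -> filterlim al F (locally a0) -> filterlim ga F (locally 0) ->
  filterlim (fun t => br (al t) (ga t)) F (locally ((a0, sqrt (1 - a0 ^ 2)) : C)).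
Proof.
intros Ha Hal Hga.
assert (Hp0 : 0 < 1 - a0 ^ 2) by nra.
assert (Hp : filterlim (fun t => bp (al t) (ga t)) F (locally (1 - a0 ^ 2 + 0 ^ 2))).
{ unfold bp. apply lim_plus. apply lim_minus. apply lim_const. apply lim_pow2; auto. apply lim_pow2; auto. }
assert (Hq : filterlim (fun t => bq (al t) (ga t)) F (locally (2 * a0 * 0))).
{ unfold bq. apply lim_mult; auto. apply lim_mult; auto. apply lim_const. }
replace (1 - a0 ^ 2 + 0 ^ 2) with (1 - a0 ^ 2) in Hp by ring.
replace (2 * a0 * 0) with 0 in Hq by ring.
assert (Hm : filterlim (fun t => bm (al t) (ga t)) F (locally (1 - a0 ^ 2))).
{ unfold bm. apply (lim_eq _ (sqrt ((1 - a0 ^ 2) ^ 2 + 0 ^ 2))).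
  replace ((1 - a0 ^ 2) ^ 2 + 0 ^ 2) with ((1 - a0 ^ 2) ^ 2) by ring. apply sqrt_pow2; lra.
  apply (lim_comp_der (fun t => bp (al t) (ga t) ^ 2 + bq (al t) (ga t) ^ 2) sqrt).
  auto_derive. nra. apply lim_plus; apply lim_pow2; auto. }
assert (Hu : filterlim (fun t => bu (al t) (ga t)) F (locally (sqrt (1 - a0 ^ 2)))).
{ unfold bu. apply (lim_eq _ (sqrt (((1 - a0 ^ 2) + (1 - a0 ^ 2)) / 2))).
  f_equal; field.
  apply (lim_comp_der (fun t => (bm (al t) (ga t) + bp (al t) (ga t)) / 2) sqrt).
  auto_derive. lra. unfold Rdiv. apply lim_mult. apply lim_plus; auto. apply lim_const. }
assert (Hs : 0 < sqrt (1 - a0 ^ 2)) by (apply sqrt_lt_R0; auto).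
assert (Hv : filterlim (fun t => bv (al t) (ga t)) F (locally 0)).
{ unfold bv. apply (lim_eq _ (0 * / (2 * sqrt (1 - a0 ^ 2)))). ring.
  unfold Rdiv. apply lim_mult; auto. apply lim_inv. lra. apply lim_mult. apply lim_const. auto. }
apply C_lim; unfold br; cbn [fst snd].
- apply (lim_eq _ (a0 - 0)). ring. apply lim_minus; auto.
- apply (lim_eq _ (sqrt (1 - a0 ^ 2) - 0)). ring. apply lim_minus; auto.
Qed.

Lemma AA_eps Om beta h om eps :
  AA Om beta h (om, eps) = ((A0 Om beta om h + eps ^ 2, - (2 * om * eps)) : C).
Proof.
unfold AA, A0, Cminus, Cplus, Copp, Cmult, RtoC; simpl.
apply injective_projections; simpl; ring.
Qed.

Section Eps.
Variables (Om beta h om : R) (n : Z).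
Hypothesis Hh : 0 < h.
Hypothesis HOm : 0 < Om.
Hypothesis Hom : 0 < om.
Let B := BB Om beta h.
Let A := A0 Om beta om h.
Hypothesis HA : - B < A < B.

Definition al_e (eps : R) := (A + eps ^ 2) / B.
Definition ga_e (eps : R) := 2 * om * eps / B.
Definition a0 := A / B.
Definition rlim : C := (a0, sqrt (1 - a0 ^ 2)).
Definition Lh : C := Cdiv (Cpow rlim (Z.abs_nat n)) (Cminus (RtoC A) (Cmult (RtoC B) rlim)).

Lemma HB : 0 < B.
Proof. apply BB_pos; auto. Qed.

Lemma a0_bd : -1 < a0 < 1.
Proof.
assert (HB' := HB). unfold a0. split.
apply (Rmult_lt_reg_r B); auto. unfold Rdiv. rewrite Rmult_assoc, Rinv_l, Rmult_1_r; lra.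
apply (Rmult_lt_reg_r B); auto. unfold Rdiv. rewrite Rmult_assoc, Rinv_l, Rmult_1_r; lra.
Qed.

Lemma eps_closed eps : 0 < eps ->
  Gh Om beta h n (om, eps) =
  Cdiv (Cpow (br (al_e eps) (ga_e eps)) (Z.abs_nat n))
       (Cminus (AA Om beta h (om, eps)) (Cmult (RtoC B) (br (al_e eps) (ga_e eps)))).
Proof.
intros He. assert (HB' := HB).
assert (Hg : 0 < ga_e eps).
{ unfold ga_e. apply Rdiv_lt_0_compat; auto. nra. }
set (r := br (al_e eps) (ga_e eps)).
assert (Hr : Cmod r < 1).
{ unfold Cmod. rewrite <- sqrt_1. apply sqrt_lt_1_alt. split.
  nra. apply branch_small; auto. }
assert (Heq : (RtoC B * r * r - RtoC 2 * AA Om beta h (om, eps) * r + RtoC B = 0)%C).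
{ rewrite AA_eps. fold A.
  destruct (branch_eq (al_e eps) (ga_e eps) Hg) as [E1 E2]. fold r in E1, E2.
  assert (EA : A + eps ^ 2 = B * al_e eps) by (unfold al_e; field; lra).
  assert (EG : 2 * om * eps = B * ga_e eps) by (unfold ga_e; field; lra).
  rewrite EA, EG.
  unfold Cminus, Cplus, Copp, Cmult, RtoC.
  apply injective_projections; cbn [fst snd].
  - transitivity (B * (fst r ^ 2 - snd r ^ 2 - 2 * (al_e eps * fst r + ga_e eps * snd r) + 1)).
    ring. rewrite E1. ring.
  - transitivity (B * (2 * fst r * snd r - 2 * (al_e eps * snd r - ga_e eps * fst r))).
    ring. rewrite E2. ring. }
destruct (lattice_formula (AA Om beta h (om, eps)) B r HB' Hr Heq n) as [_ Hv].
rewrite Gh_eq. fold B. rewrite Hv. reflexivity.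
Qed.

Lemma eps_lim : filterlim (fun eps => Gh Om beta h n (om, eps)) (at_right 0) (locally Lh).
Proof.
assert (HB' := HB). assert (Ha0 := a0_bd).
apply (C_lim_ext (fun eps => Cdiv (Cpow (br (al_e eps) (ga_e eps)) (Z.abs_nat n))
       (Cminus (AA Om beta h (om, eps)) (Cmult (RtoC B) (br (al_e eps) (ga_e eps)))))).
{ generalize ev_hpos. apply filter_imp. intros e He. rewrite eps_closed; auto. }
assert (Hr : filterlim (fun eps => br (al_e eps) (ga_e eps)) (at_right 0) (locally rlim)).
{ apply br_lim; auto.
  - unfold al_e, a0. apply (lim_eq _ ((A + 0 ^ 2) * / B)). unfold Rdiv; ring.
    unfold Rdiv. apply lim_mult. apply lim_plus. apply lim_const. apply lim_pow2, lim_at_right_id. apply lim_const.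
  - unfold ga_e. apply (lim_eq _ (2 * om * 0 * / B)). field; lra.
    unfold Rdiv. apply lim_mult. apply lim_mult. apply lim_const. apply lim_at_right_id. apply lim_const. }
unfold Lh. apply C_lim_div.
- intro E. unfold rlim, Cminus, Cplus, Copp, Cmult, RtoC in E. injection E. intros E2 _. simpl in E2.
  assert (0 < sqrt (1 - a0 * (a0 * 1))) by (apply sqrt_lt_R0; nra). nra.
- apply C_lim_pow. auto.
- apply C_lim_minus.
  + apply (C_lim_ext (fun eps => ((A0 Om beta om h + eps ^ 2, - (2 * om * eps)) : C))).
    { apply filter_forall. intros; rewrite AA_eps; reflexivity. }
    apply C_lim; simpl.
    * apply (lim_eq _ (A + 0 ^ 2)). ring. apply lim_plus. apply lim_const. apply lim_pow2, lim_at_right_id.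
    * apply (lim_eq _ (- (2 * om * 0))). ring. apply lim_opp. apply lim_mult. apply lim_const. apply lim_at_right_id.
  + apply C_lim_mult. apply C_lim_const. auto.
Qed.

End Eps.

Lemma sqrt_val2 (Om beta om : R) : 0 < Om -> 0 < om ^ 2 / Om ^ 2 - beta ^ 2 ->
  sqrt ((om ^ 2 - Om ^ 2 * beta ^ 2) * (4 * Om ^ 2)) = 2 * Om ^ 2 * sqrt (om ^ 2 / Om ^ 2 - beta ^ 2).
Proof.
intros HO Hs.
set (s := sqrt (om ^ 2 / Om ^ 2 - beta ^ 2)).
assert (Hs2 : s * s = om ^ 2 / Om ^ 2 - beta ^ 2) by (apply sqrt_sqrt; lra).
assert (0 <= s) by apply sqrt_pos.
replace ((om ^ 2 - Om ^ 2 * beta ^ 2) * (4 * Om ^ 2)) with ((2 * Om ^ 2 * s) ^ 2).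
apply sqrt_pow2. assert (0 < Om ^ 2) by (apply pow_lt; auto). nra.
replace ((2 * Om ^ 2 * s) ^ 2) with (4 * Om ^ 2 * Om ^ 2 * (s * s)) by ring.
rewrite Hs2. field. lra.
Qed.

Lemma asin_der0 : derivable_pt_lim asin 0 1.
Proof.
assert (H : -1 < 0 < 1) by lra.
apply (derive_pt_eq_1 _ _ _ (derivable_pt_asin 0 H)).
rewrite derive_pt_asin. unfold Rsqr. replace (1 - 0 * 0) with 1 by ring. rewrite sqrt_1. field.
Qed.

Lemma gcont2 Om beta ax om : 0 < Om -> 0 < beta -> beta * Om < om ->
  gcont Om beta ax om =
  ((- (/ (2 * Om ^ 2)) * (sin (ax * sqrt (om ^ 2 / Om ^ 2 - beta ^ 2)) / sqrt (om ^ 2 / Om ^ 2 - beta ^ 2)),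
    / (2 * Om ^ 2) * (cos (ax * sqrt (om ^ 2 / Om ^ 2 - beta ^ 2)) / sqrt (om ^ 2 / Om ^ 2 - beta ^ 2))) : C).
Proof.
intros HO Hb Hc. unfold gcont. destruct (Rlt_dec om (beta * Om)) as [E|_]; [lra|].
set (s := sqrt (om ^ 2 / Om ^ 2 - beta ^ 2)).
assert (Hs : 0 < s).
{ unfold s. apply sqrt_lt_R0. assert (0 < Om ^ 2) by (apply pow_lt; auto).
  assert ((beta * Om) ^ 2 < om ^ 2).
  { assert (0 < beta * Om) by nra. nra. }
  apply Rlt_Rminus. apply (Rmult_lt_reg_r (Om ^ 2)); auto.
  unfold Rdiv. rewrite Rmult_assoc, Rinv_l by lra. nra. }
unfold Cmult, Cdiv, Cinv, Ci, RtoC, cexpi.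
apply injective_projections; simpl; field; lra.
Qed.

Section Part2.
Variables (Om beta x om : R) (n : R -> Z).
Hypothesis HOm : 0 < Om.
Hypothesis Hbeta : 0 < beta.
Hypothesis Hn : filterlim (fun h => IZR (n h) * h) (at_right 0) (locally (Rabs x)).
Hypothesis Hom : beta * Om < om.

Let s2 := sqrt (om ^ 2 / Om ^ 2 - beta ^ 2).
Definition Q2 h := sqrt (- P1 Om beta om h * P2 Om beta om h).
Definition y0 h := sqrt (1 - a0 Om beta h om ^ 2).
Definition th h := asin (y0 h).

Lemma om_pos : 0 < om.
Proof. assert (0 < beta * Om) by nra. lra. Qed.

Lemma s2_arg : 0 < om ^ 2 / Om ^ 2 - beta ^ 2.
Proof.
assert (0 < Om ^ 2) by (apply pow_lt; auto).
assert ((beta * Om) ^ 2 < om ^ 2) by (assert (0 < beta * Om) by nra; nra).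
apply Rlt_Rminus. apply (Rmult_lt_reg_r (Om ^ 2)); auto.
unfold Rdiv. rewrite Rmult_assoc, Rinv_l by lra. nra.
Qed.

Lemma s2_pos : 0 < s2.
Proof. apply sqrt_lt_R0, s2_arg. Qed.

Lemma L_Q2 : filterlim Q2 (at_right 0) (locally (2 * Om ^ 2 * s2)).
Proof.
unfold s2. rewrite <- sqrt_val2; auto. 2: apply s2_arg.
unfold Q2. apply (lim_comp_der (fun h => - P1 Om beta om h * P2 Om beta om h) sqrt).
- auto_derive. assert (0 < om ^ 2 - Om ^ 2 * beta ^ 2).
  { assert ((beta * Om) ^ 2 < om ^ 2) by (assert (0 < beta * Om) by nra; nra). nra. }
  assert (0 < Om ^ 2) by (apply pow_lt; auto). nra.
- apply (lim_eq _ (- (Om ^ 2 * beta ^ 2 - om ^ 2) * (4 * Om ^ 2))). ring.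
  apply lim_mult. apply lim_opp, L_P1. apply L_P2.
Qed.

Lemma L_a0 : filterlim (fun h => 1 + h ^ 2 * P1 Om beta om h / P3 Om beta h) (at_right 0) (locally 1).
Proof.
apply (lim_eq _ (1 + 0 ^ 2 * (Om ^ 2 * beta ^ 2 - om ^ 2) * / (2 * Om ^ 2))). field. lra.
apply lim_plus. apply lim_const. unfold Rdiv. apply lim_mult. apply lim_mult.
apply lim_pow2, lim_at_right_id. apply L_P1. apply lim_inv.
assert (0 < Om ^ 2) by (apply pow_lt; auto). lra. apply L_P3.
Qed.

Definition good h := 0 < h /\ P1 Om beta om h < 0 /\ 0 < 1 + h ^ 2 * P1 Om beta om h / P3 Om beta h.

Lemma ev_good : at_right 0 good.
Proof.
unfold good. apply filter_and. apply ev_hpos. apply filter_and.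
apply (ev_lt _ _ 0 (L_P1 Om beta om)).
assert ((beta * Om) ^ 2 < om ^ 2) by (assert (0 < beta * Om) by nra; nra). nra.
apply (ev_gt _ _ 0 L_a0). lra.
Qed.

Lemma good_facts2 h : good h ->
  let B := BB Om beta h in let A := A0 Om beta om h in
  0 < B /\ - B < A < B /\ a0 Om beta h om = 1 + h ^ 2 * P1 Om beta om h / P3 Om beta h /\
  0 < Q2 h /\ y0 h = h * Q2 h / P3 Om beta h /\ 0 < y0 h < 1 /\
  cexpi (th h) = rlim Om beta h om.
Proof.
intros [Hh [HP1 Ha]] B A.
assert (HB : 0 < B) by (apply BB_pos; auto).
assert (Hh2 : 0 < h ^ 2) by (apply pow_lt; auto).
assert (HP3 : P3 Om beta h = h ^ 2 * B) by reflexivity.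
assert (HAB : P1 Om beta om h = A - B) by reflexivity.
assert (HP2 : P2 Om beta om h = h ^ 2 * (A + B)) by reflexivity.
assert (Ha0 : a0 Om beta h om = 1 + h ^ 2 * P1 Om beta om h / P3 Om beta h).
{ unfold a0. cbv zeta. fold A B. rewrite HP3, HAB. field. lra. }
assert (HA0 : 0 < A / B) by (rewrite HP3, HAB in Ha; replace (A / B) with (1 + h ^ 2 * (A - B) / (h ^ 2 * B)) by (field; lra); auto).
assert (HApos : 0 < A).
{ replace A with (A / B * B) by (field; lra). nra. }
assert (HAB2 : - B < A < B) by (split; lra).
assert (HP2p : 0 < P2 Om beta om h) by (rewrite HP2; nra).
assert (HQ : 0 < Q2 h) by (apply sqrt_lt_R0; nra).
assert (HQ2 : Q2 h * Q2 h = - P1 Om beta om h * P2 Om beta om h) by (apply sqrt_sqrt; nra).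
assert (Hy : y0 h = h * Q2 h / P3 Om beta h).
{ unfold y0. rewrite <- (sqrt_pow2 (h * Q2 h / P3 Om beta h)).
  2: { rewrite HP3. apply Rlt_le. apply Rdiv_lt_0_compat; nra. }
  f_equal. rewrite Ha0. rewrite HP3.
  replace ((h * Q2 h / (h ^ 2 * B)) ^ 2) with (Q2 h * Q2 h / (h ^ 2 * B ^ 2)) by (field; lra).
  rewrite HQ2, HP2, HAB. field. lra. }
assert (Hy2 : y0 h ^ 2 = 1 - a0 Om beta h om ^ 2).
{ unfold y0. apply pow2_sqrt. rewrite Ha0, HP3, HAB.
  replace (1 + h ^ 2 * (A - B) / (h ^ 2 * B)) with (A / B) by (field; lra).
  assert (A / B < 1). { apply (Rmult_lt_reg_r B); auto. unfold Rdiv. rewrite Rmult_assoc, Rinv_l by lra. lra. }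
  nra. }
assert (Hyp : 0 < y0 h) by (rewrite Hy, HP3; apply Rdiv_lt_0_compat; nra).
assert (Hy1 : y0 h < 1).
{ assert (0 < a0 Om beta h om) by (rewrite Ha0; auto). nra. }
repeat split; auto; try lra.
unfold th, cexpi, rlim. cbv zeta. fold (y0 h).
rewrite sin_asin by lra. rewrite cos_asin by lra.
f_equal. fold (a0 Om beta h om). unfold Rsqr.
replace (1 - y0 h * y0 h) with (a0 Om beta h om ^ 2) by nra.
apply sqrt_pow2. rewrite Ha0; lra.
Qed.

Lemma L_y0h : filterlim (fun h => Q2 h / P3 Om beta h) (at_right 0) (locally s2).
Proof.
apply (lim_eq _ (2 * Om ^ 2 * s2 * / (2 * Om ^ 2))). field. lra.
unfold Rdiv. apply lim_mult. apply L_Q2. apply lim_inv. assert (0 < Om ^ 2) by (apply pow_lt; auto). lra.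
apply L_P3.
Qed.

Lemma L_th : filterlim (fun h => th h / h) (at_right 0) (locally s2).
Proof.
assert (Hy : filterlim y0 (at_right 0) (locally 0)).
{ apply (lim_ext (fun h => h * (Q2 h / P3 Om beta h))).
  { generalize ev_good. apply filter_imp. intros h Hg.
    destruct (good_facts2 h Hg) as [_ [_ [_ [_ [E _]]]]]. rewrite E. unfold Rdiv. ring. }
  apply (lim_eq _ (0 * s2)). ring. apply lim_mult. apply lim_at_right_id. apply L_y0h. }
assert (Hyn : at_right 0 (fun h => y0 h <> 0)).
{ generalize ev_good. apply filter_imp. intros h Hg.
  destruct (good_facts2 h Hg) as [_ [_ [_ [_ [_ [E _]]]]]]. lra. }
apply (lim_ext (fun h => asin (y0 h) / y0 h * (Q2 h / P3 Om beta h))).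
{ generalize ev_good. apply filter_imp. intros h Hg. pose proof Hg as [Hh _].
  destruct (good_facts2 h Hg) as [_ [_ [_ [_ [E [E2 _]]]]]].
  unfold th. rewrite E. rewrite E in E2. field.
  assert (P3 Om beta h <> 0). { intro Z. rewrite Z in E2. unfold Rdiv in E2. rewrite Rinv_0, Rmult_0_r in E2. lra. }
  assert (Q2 h <> 0). { intro Z. rewrite Z in E2. lra. }
  repeat split; try lra; auto. }
apply (lim_eq _ (1 * s2)). ring. apply lim_mult. 2: apply L_y0h.
apply (lim_quot asin 1 y0); auto. apply asin_0. apply asin_der0.
Qed.

Lemma L_m2 : filterlim (fun h => INR (Z.abs_nat (n h)) * h) (at_right 0) (locally (Rabs x)).
Proof.
apply (lim_ext (fun h => Rabs (IZR (n h) * h))).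
{ generalize ev_hpos. apply filter_imp. intros h Hh. rewrite INR_abs_nat, Rabs_mult.
  rewrite (Rabs_pos_eq h); lra. }
rewrite <- (Rabs_Rabsolu x). apply lim_Rabs. auto.
Qed.

Theorem part2 : exists L : R -> C,
       (exists d : R, 0 < d /\ forall h, 0 < h < d ->
          filterlim (fun eps => Gh Om beta h (n h) (om, eps)) (at_right 0) (locally (L h))) /\
       filterlim (fun h => Cmult (RtoC (/ h)) (L h))
         (at_right 0) (locally (gcont Om beta (Rabs x) om)).
Proof.
exists (fun h => Lh Om beta h om (n h)). split.
- destruct ev_good as [d Hd]. exists d. split. apply cond_pos.
  intros h [Hh Hhd]. assert (Hg : good h).
  { apply Hd; auto. apply ball_R. rewrite Rminus_0_r, Rabs_pos_eq; lra. }
  destruct (good_facts2 h Hg) as [_ [HA _]].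
  apply eps_lim; auto. apply om_pos.
- rewrite gcont2; auto. fold s2.
  set (mt := fun h => INR (Z.abs_nat (n h)) * th h).
  apply (C_lim_ext (fun h => ((- sin (mt h) / Q2 h, cos (mt h) / Q2 h) : C))).
  { generalize ev_good. apply filter_imp. intros h Hg. pose proof Hg as [Hh _].
    destruct (good_facts2 h Hg) as [HB [HA [Ha0 [HQ [Hy [Hy01 Hc]]]]]].
    unfold Lh. cbv zeta. rewrite <- Hc, Cpow_cexpi. fold mt.
    unfold mt. unfold rlim in Hc. cbv zeta in Hc.
    assert (Ecos : cos (th h) = a0 Om beta h om) by (unfold cexpi in Hc; congruence).
    assert (Esin : sin (th h) = y0 h).
    { unfold cexpi in Hc. injection Hc. intros. auto. }
    assert (HBA : BB Om beta h * a0 Om beta h om = A0 Om beta om h).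
    { unfold a0. cbv zeta. field. lra. }
    assert (HP3 : P3 Om beta h = h ^ 2 * BB Om beta h) by reflexivity.
    rewrite HP3 in Hy.
    assert (ED : Cminus (RtoC (A0 Om beta om h)) (Cmult (RtoC (BB Om beta h)) (cexpi (th h)))
               = ((0, - (Q2 h / h)) : C)).
    { unfold cexpi, Cmult, Cminus, Cplus, Copp, RtoC.
      apply injective_projections; cbn [fst snd]; rewrite ?Ecos, ?Esin; rewrite ?HBA; rewrite ?Hy; field; lra. }
    rewrite ED.
    assert (0 < Q2 h / h) by (apply Rdiv_lt_0_compat; lra).
    set (q := Q2 h / h) in *.
    unfold cexpi, Cmult, Cdiv, Cinv, RtoC.
    apply injective_projections; simpl; unfold q; field; lra. }
  apply C_lim; cbn [fst snd].
  + apply (lim_eq _ (- sin (Rabs x * s2) * / (2 * Om ^ 2 * s2))).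
    { assert (Hs := s2_pos). field. split; lra. }
    unfold Rdiv. apply lim_mult.
    * apply lim_opp. apply (lim_comp_der mt sin). auto_derive; auto.
      unfold mt. apply (lim_ext (fun h => INR (Z.abs_nat (n h)) * h * (th h / h))).
      { generalize ev_hpos. apply filter_imp. intros h Hh. field. lra. }
      apply lim_mult. apply L_m2. apply L_th.
    * apply lim_inv. assert (Hs := s2_pos). assert (0 < Om ^ 2) by (apply pow_lt; auto). nra. apply L_Q2.
  + apply (lim_eq _ (cos (Rabs x * s2) * / (2 * Om ^ 2 * s2))).
    { assert (Hs := s2_pos). field. split; lra. }
    unfold Rdiv. apply lim_mult.
    * apply (lim_comp_der mt cos). auto_derive; auto.
      unfold mt. apply (lim_ext (fun h => INR (Z.abs_nat (n h)) * h * (th h / h))).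
      { generalize ev_hpos. apply filter_imp. intros h Hh. field. lra. }
      apply lim_mult. apply L_m2. apply L_th.
    * apply lim_inv. assert (Hs := s2_pos). assert (0 < Om ^ 2) by (apply pow_lt; auto). nra. apply L_Q2.
Qed.

End Part2.

Lemma is_derive_val (f : R -> R) (x l l' : R) : l = l' -> is_derive f x l -> is_derive f x l'.
Proof. intros ->; auto. Qed.

Lemma is_derive_Rmult (f g : R -> R) x df dg : is_derive f x df -> is_derive g x dg ->
  is_derive (fun t => f t * g t) x (df * g x + f x * dg).
Proof. intros. apply (is_derive_mult f g); auto. intros; apply Rmult_comm. Qed.

Lemma is_derive_Rminus (f g : R -> R) x df dg : is_derive f x df -> is_derive g x dg ->
  is_derive (fun t => f t - g t) x (df - dg).
Proof. intros. apply (is_derive_minus f g); auto. Qed.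

Lemma is_derive_Rplus (f g : R -> R) x df dg : is_derive f x df -> is_derive g x dg ->
  is_derive (fun t => f t + g t) x (df + dg).
Proof. intros. apply (is_derive_plus f g); auto. Qed.

Lemma is_derive_opp_arg (f : R -> R) x df : is_derive f (- x) df ->
  is_derive (fun t => f (- t)) x (- df).
Proof.
intros H. apply (is_derive_val _ _ (scal (-1) df)). unfold scal; simpl; unfold mult; simpl; ring.
apply (is_derive_comp f (fun t => - t)); auto.
assert (Hn : is_derive (fun t : R => - t) x (-1)) by (auto_derive; auto; ring). exact Hn.
Qed.

Lemma vanish_right (f : R -> R) a : continuous f a -> (forall y, a < y -> f y = 0) -> f a = 0.
Proof.
intros Hc Hz. destruct (Req_dec (f a) 0) as [|Hn]; auto. exfalso.
assert (Hp : 0 < Rabs (f a)) by (apply Rabs_pos_lt; auto).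
assert (H := proj1 (filterlim_locally f (f a)) Hc (mkposreal _ Hp)).
destruct H as [d Hd].
specialize (Hd (a + d / 2)). assert (Hb : ball a d (a + d / 2)).
{ apply ball_R. replace (a + d / 2 - a) with (d / 2) by ring.
  rewrite Rabs_pos_eq; generalize (cond_pos d); lra. }
specialize (Hd Hb). rewrite Hz in Hd. 2: generalize (cond_pos d); lra.
assert (Hb2 : Rabs (0 - f a) < Rabs (f a)) by exact Hd.
rewrite Rminus_0_l, Rabs_Ropp in Hb2. lra.
Qed.

Lemma vanish_left (f : R -> R) a : continuous f a -> (forall y, y < a -> f y = 0) -> f a = 0.
Proof.
intros Hc Hz. destruct (Req_dec (f a) 0) as [|Hn]; auto. exfalso.
assert (Hp : 0 < Rabs (f a)) by (apply Rabs_pos_lt; auto).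
assert (H := proj1 (filterlim_locally f (f a)) Hc (mkposreal _ Hp)).
destruct H as [d Hd].
specialize (Hd (a - d / 2)). assert (Hb : ball a d (a - d / 2)).
{ apply ball_R. replace (a - d / 2 - a) with (- (d / 2)) by ring.
  rewrite Rabs_Ropp, Rabs_pos_eq; generalize (cond_pos d); lra. }
specialize (Hd Hb). rewrite Hz in Hd. 2: generalize (cond_pos d); lra.
assert (Hb2 : Rabs (0 - f a) < Rabs (f a)) by exact Hd.
rewrite Rminus_0_l, Rabs_Ropp in Hb2. lra.
Qed.

Section Dist.
Variables (G G1 : R -> R) (c : R) (phi : R -> R) (M : R).
Hypothesis HG : forall t, is_derive G t (G1 t).
Hypothesis HG1 : forall t, is_derive G1 t (- c * G t).
Hypothesis Hphi : forall m y, ex_derive_n phi m y.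
Hypothesis HM : 0 < M.
Hypothesis Hsupp : forall y, M < Rabs y -> phi y = 0.

Lemma d1 y : is_derive phi y (Derive phi y).
Proof. apply Derive_correct. exact (Hphi 1 y). Qed.

Lemma d2 y : is_derive (Derive phi) y (Derive_n phi 2 y).
Proof. apply (Derive_correct (Derive_n phi 1)). exact (Hphi 2 y). Qed.

Lemma cont_phi y : continuous phi y.
Proof. apply (@ex_derive_continuous R_AbsRing R_NormedModule phi). exact (Hphi 1 y). Qed.

Lemma cont_d1 y : continuous (Derive phi) y.
Proof. apply (@ex_derive_continuous R_AbsRing R_NormedModule (Derive_n phi 1)). exact (Hphi 2 y). Qed.

Lemma cont_d2 y : continuous (Derive_n phi 2) y.
Proof. apply (@ex_derive_continuous R_AbsRing R_NormedModule (Derive_n phi 2)). exact (Hphi 3 y). Qed.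

Lemma d1_zero y : M < Rabs y -> Derive phi y = 0.
Proof.
intros Hy. rewrite (Derive_ext_loc phi (fun _ => 0)). apply Derive_const.
assert (Hp : 0 < Rabs y - M) by lra.
exists (mkposreal _ Hp). intros t Ht. apply Hsupp.
assert (Ht2 : Rabs (t - y) < Rabs y - M) by exact Ht.
assert (Rabs y <= Rabs t + Rabs (y - t)).
{ replace y with (t + (y - t)) at 1 by ring. apply Rabs_triang. }
rewrite Rabs_minus_sym in Ht2. lra.
Qed.

Lemma edges : phi M = 0 /\ phi (- M) = 0 /\ Derive phi M = 0 /\ Derive phi (- M) = 0.
Proof.
repeat split.
- apply vanish_right. apply cont_phi. intros y Hy. apply Hsupp. rewrite Rabs_pos_eq; lra.
- apply vanish_left. apply cont_phi. intros y Hy. apply Hsupp. rewrite Rabs_left; lra.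
- apply vanish_right. apply cont_d1. intros y Hy. apply d1_zero. rewrite Rabs_pos_eq; lra.
- apply vanish_left. apply cont_d1. intros y Hy. apply d1_zero. rewrite Rabs_left; lra.
Qed.

Lemma cont_G t : continuous G t.
Proof. apply (@ex_derive_continuous R_AbsRing R_NormedModule G). exists (G1 t). apply HG. Qed.

Lemma cont_integrand (H : R -> R) (HH : forall t, continuous H t) y :
  continuous (fun y => H y * (Derive_n phi 2 y + c * phi y)) y.
Proof.
apply (lim_mult (fun y => H y) (fun y => Derive_n phi 2 y + c * phi y)). apply HH.
apply lim_plus. apply cont_d2. apply lim_mult. apply lim_const. apply cont_phi.
Qed.

Lemma int_right : is_RInt (fun y => G (Rabs y) * (Derive_n phi 2 y + c * phi y)) 0 M
  (- G 0 * Derive phi 0 + G1 0 * phi 0).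
Proof.
destruct edges as [E1 [E2 [E3 E4]]].
apply (is_RInt_ext (fun y => G y * (Derive_n phi 2 y + c * phi y))).
{ intros y Hy. rewrite Rmin_left, Rmax_right in Hy by lra. rewrite Rabs_pos_eq; lra. }
eapply is_RInt_R_val.
2: apply (is_RInt_derive (fun y => G y * Derive phi y - G1 y * phi y)).
- unfold minus, plus, opp; simpl. rewrite E1, E3. ring.
- intros y _. eapply is_derive_val. 2: apply is_derive_Rminus; apply is_derive_Rmult.
  2: apply HG. 2: apply d2. 2: apply HG1. 2: apply d1. ring.
- intros y _. apply cont_integrand. apply cont_G.
Qed.

Lemma int_left : is_RInt (fun y => G (Rabs y) * (Derive_n phi 2 y + c * phi y)) (- M) 0
  (G 0 * Derive phi 0 + G1 0 * phi 0).
Proof.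
destruct edges as [E1 [E2 [E3 E4]]].
apply (is_RInt_ext (fun y => G (- y) * (Derive_n phi 2 y + c * phi y))).
{ intros y Hy. rewrite Rmin_left, Rmax_right in Hy by lra. rewrite Rabs_left; lra. }
eapply is_RInt_R_val.
2: apply (is_RInt_derive (fun y => G (- y) * Derive phi y + G1 (- y) * phi y)).
- unfold minus, plus, opp; simpl. rewrite E2, E4. rewrite Ropp_involutive, Ropp_0. ring.
- intros y _. eapply is_derive_val. 2: apply is_derive_Rplus; apply is_derive_Rmult.
  2: apply is_derive_opp_arg, HG. 2: apply d2. 2: apply is_derive_opp_arg, HG1. 2: apply d1. cbv beta. ring.
- intros y _. apply cont_integrand. intros t.
  apply (lim_comp_der (fun t => - t) G). exists (G1 (- t)). apply HG.
  apply lim_opp. apply filterlim_id.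
Qed.

Lemma int_total : is_RInt (fun y => G (Rabs y) * (Derive_n phi 2 y + c * phi y)) (- M) M
  (2 * G1 0 * phi 0).
Proof.
eapply is_RInt_R_val. 2: apply (is_RInt_Chasles _ _ 0 _ _ _ int_left int_right).
unfold plus; simpl. ring.
Qed.

End Dist.

Ltac toR := match goal with |- ?a = ?b => change (@eq R a b) end.

Lemma dist_comp (G G1 : R -> R) c phi M K :
  (forall t, is_derive G t (G1 t)) -> (forall t, is_derive G1 t (- c * G t)) ->
  (forall m y, ex_derive_n phi m y) -> 0 < M -> (forall y, M < Rabs y -> phi y = 0) ->
  is_RInt (fun y => G (Rabs y) * (K * (Derive_n phi 2 y + c * phi y))) (- M) M
     (K * (2 * G1 0 * phi 0)).
Proof.
intros HG HG1 Hphi HM Hs.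
apply (is_RInt_ext (V := R_NormedModule) (fun y => K * (G (Rabs y) * (Derive_n phi 2 y + c * phi y)))).
{ intros y _. simpl. ring. }
apply (@is_RInt_scal R_NormedModule).
apply int_total; auto.
Qed.

Lemma is_RInt_zero (a b : R) : is_RInt (fun _ => 0) a b 0.
Proof.
eapply is_RInt_R_val. 2: apply (@is_RInt_const R_NormedModule).
unfold scal; simpl; unfold mult; simpl; ring.
Qed.

Theorem part3 (Om beta : R) : 0 < Om -> 0 < beta ->
  (forall om : R, 0 <= om -> om <> beta * Om ->
     forall phi : R -> R, test_function phi ->
     forall M : R, 0 < M -> (forall y, M < Rabs y -> phi y = 0) ->
       @RInt C_R_CompleteNormedModule
         (fun y => Cmult (gcont Om beta (Rabs y) om)
                     (RtoC (- Om ^ 2 * (Derive_n phi 2 y + (om ^ 2 / Om ^ 2 - beta ^ 2) * phi y))))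
         (- M) M
       = RtoC (phi 0)).
Proof.
intros HOm Hbeta om Hom Hne phi [Hphi _] M HM Hsupp.
assert (HO2 : 0 < Om ^ 2) by (apply pow_lt; auto).
set (c := om ^ 2 / Om ^ 2 - beta ^ 2).
apply (@is_RInt_unique CV).
destruct (Rlt_dec om (beta * Om)) as [Hlt|Hge].
-
  set (s := sqrt (beta ^ 2 - om ^ 2 / Om ^ 2)).
  assert (Harg : 0 < beta ^ 2 - om ^ 2 / Om ^ 2).
  { assert (om ^ 2 < (beta * Om) ^ 2) by nra.
    apply Rlt_Rminus. apply (Rmult_lt_reg_r (Om ^ 2)); auto.
    unfold Rdiv. rewrite Rmult_assoc, Rinv_l by lra. nra. }
  assert (Hs : 0 < s) by (apply sqrt_lt_R0; auto).
  assert (Hs2 : s * s = beta ^ 2 - om ^ 2 / Om ^ 2) by (apply sqrt_sqrt; lra).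
  set (G := fun t => / (2 * Om ^ 2) * (exp (- t * s) / s)).
  set (G1 := fun t => / (2 * Om ^ 2) * (- exp (- t * s))).
  assert (HG : forall t, is_derive G t (G1 t)).
  { intros t. unfold G, G1. auto_derive; auto. field. split; lra. }
  assert (HG1 : forall t, is_derive G1 t (- c * G t)).
  { intros t. unfold G, G1, c. auto_derive; auto.
    replace (om ^ 2 / Om ^ 2 - beta ^ 2) with (- (s * s)) by lra. field. split; lra. }
  assert (Hint := dist_comp G G1 c phi M (- Om ^ 2) HG HG1 Hphi HM Hsupp).
  replace (RtoC (phi 0)) with ((- Om ^ 2 * (2 * G1 0 * phi 0), 0) : C).
  2: { unfold G1, RtoC. f_equal. replace (- 0 * s) with 0 by ring. rewrite exp_0. field. lra. }
  apply is_RInt_C.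
  + apply (is_RInt_ext (V := R_NormedModule) (fun y => G (Rabs y) * (- Om ^ 2 * (Derive_n phi 2 y + c * phi y)))); auto.
    intros y _. toR. unfold gcont. destruct (Rlt_dec om (beta * Om)); [|lra].
    fold s. unfold Cmult, RtoC, G. cbn [fst snd]. fold c. ring.
  + apply (is_RInt_ext (V := R_NormedModule) (fun _ => 0)). 2: apply is_RInt_zero.
    intros y _. toR. unfold gcont. destruct (Rlt_dec om (beta * Om)); [|lra].
    unfold Cmult, RtoC. cbn [fst snd]. ring.
- assert (Hgt : beta * Om < om) by lra.
  set (s := sqrt (om ^ 2 / Om ^ 2 - beta ^ 2)).
  assert (Harg : 0 < om ^ 2 / Om ^ 2 - beta ^ 2).
  { assert ((beta * Om) ^ 2 < om ^ 2) by (assert (0 < beta * Om) by nra; nra).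
    apply Rlt_Rminus. apply (Rmult_lt_reg_r (Om ^ 2)); auto.
    unfold Rdiv. rewrite Rmult_assoc, Rinv_l by lra. nra. }
  assert (Hs : 0 < s) by (apply sqrt_lt_R0; auto).
  assert (Hs2 : s * s = om ^ 2 / Om ^ 2 - beta ^ 2) by (apply sqrt_sqrt; lra).
  set (k := / (2 * Om ^ 2)).
  set (Ga := fun t => - k * (sin (t * s) / s)).
  set (Ga1 := fun t => - k * cos (t * s)).
  set (Gb := fun t => k * (cos (t * s) / s)).
  set (Gb1 := fun t => - k * sin (t * s)).
  assert (HGa : forall t, is_derive Ga t (Ga1 t)).
  { intros t. unfold Ga, Ga1. auto_derive; auto. field. lra. }
  assert (HGa1 : forall t, is_derive Ga1 t (- c * Ga t)).
  { intros t. unfold Ga, Ga1, c. auto_derive; auto. rewrite <- Hs2. field. lra. }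
  assert (HGb : forall t, is_derive Gb t (Gb1 t)).
  { intros t. unfold Gb, Gb1. auto_derive; auto. field. lra. }
  assert (HGb1 : forall t, is_derive Gb1 t (- c * Gb t)).
  { intros t. unfold Gb, Gb1, c. auto_derive; auto. rewrite <- Hs2. field. lra. }
  assert (Ia := dist_comp Ga Ga1 c phi M (- Om ^ 2) HGa HGa1 Hphi HM Hsupp).
  assert (Ib := dist_comp Gb Gb1 c phi M (- Om ^ 2) HGb HGb1 Hphi HM Hsupp).
  replace (RtoC (phi 0)) with ((- Om ^ 2 * (2 * Ga1 0 * phi 0), - Om ^ 2 * (2 * Gb1 0 * phi 0)) : C).
  2: { unfold Ga1, Gb1, k, RtoC. rewrite !Rmult_0_l, cos_0, sin_0. f_equal; field; lra. }
  apply is_RInt_C.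
  + apply (is_RInt_ext (V := R_NormedModule) (fun y => Ga (Rabs y) * (- Om ^ 2 * (Derive_n phi 2 y + c * phi y)))); auto.
    intros y _. toR. rewrite gcont2; auto. fold s. fold k. unfold Cmult, RtoC, Ga. cbn [fst snd]. fold c. ring.
  + apply (is_RInt_ext (V := R_NormedModule) (fun y => Gb (Rabs y) * (- Om ^ 2 * (Derive_n phi 2 y + c * phi y)))); auto.
    intros y _. toR. rewrite gcont2; auto. fold s. fold k. unfold Cmult, RtoC, Gb. cbn [fst snd]. fold c. ring.
Qed.

Theorem mainTheorem5 (Om beta x : R) (n : R -> Z) :
  0 < Om -> 0 < beta ->
  filterlim (fun h => IZR (n h) * h) (at_right 0) (locally (Rabs x)) ->
  (forall om : R, 0 <= om < beta * Om ->
     filterlim (fun h => Cmult (RtoC (/ h)) (Gh Om beta h (n h) (RtoC om)))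
       (at_right 0) (locally (gcont Om beta (Rabs x) om))) /\
  (forall om : R, beta * Om < om ->
     exists L : R -> C,
       (exists d : R, 0 < d /\ forall h, 0 < h < d ->
          filterlim (fun eps => Gh Om beta h (n h) (om, eps)) (at_right 0) (locally (L h))) /\
       filterlim (fun h => Cmult (RtoC (/ h)) (L h))
         (at_right 0) (locally (gcont Om beta (Rabs x) om))) /\
  (forall om : R, 0 <= om -> om <> beta * Om ->
     forall phi : R -> R, test_function phi ->
     forall M : R, 0 < M -> (forall y, M < Rabs y -> phi y = 0) ->
       @RInt C_R_CompleteNormedModule
         (fun y => Cmult (gcont Om beta (Rabs y) om)
                     (RtoC (- Om ^ 2 * (Derive_n phi 2 y + (om ^ 2 / Om ^ 2 - beta ^ 2) * phi y))))
         (- M) M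
       = RtoC (phi 0)).
Proof.
intros HOm Hbeta Hn. split; [|split].
- intros om Hom. apply part1; auto.
- intros om Hom. apply part2; auto.
- apply part3; auto.
Qed.
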